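(* Let $A>0$, $b>0$ and $\rho\in(\frac14,\frac12)$. Then, as $h\to0_+$, \[ \inf_{\substack{m\in\mathbb Z\\|m|\le A}}\lambda_1\bigl(\mathcal H^{b,\rho}_{m,h}\bigr)=-1-h^{1/2}+\Bigl(\hat\beta(b,A)-\frac12\Bigr)h+o(h), \qquad\hat\beta(b,A)=\inf_{\substack{m\in\mathbb Z\\|m|\le A}}\Bigl(m-\frac b2\Bigr)^2. \]
   Context: Let $h\in(0,1)$ with $h^{\frac12-\rho}<\frac13$ and $\delta=h^{\rho-\frac12}$. For $m\in\mathbb Z$, $\mathcal H^{b,\rho}_{m,h}$ is the self-adjoint operator in the weighted space $L^2((0,\delta);(1-h^{1/2}\tau)d\tau)$ associated with the quadratic form \[ v\mapsto\int_0^\delta\Bigl(|v'(\tau)|^2+\frac{h}{(1-h^{1/2}\tau)^2}\Bigl(m-\frac b2(1-h^{1/2}\tau)^2\Bigr)^2|v(\tau)|^2\Bigr)(1-h^{1/2}\tau)\,d\tau-|v(0)|^2 \] on $\{v\in H^1((0,\delta)):v(\delta)=0\}$ (boundary conditions $v'(0)=-v(0)$, $v(\delta)=0$). $\lambda_1(\cdot)$ denotes the lowest eigenvalue. *)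

(* Defs.v *)
From Stdlib Require Import Reals Lra ZArith.
Open Scope R_scope.

Definition wgt (h tau : R) : R := 1 - sqrt h * tau.

Definition delta (rho h : R) : R := Rpower h (rho - 1/2).

Definition pot (b : R) (m : Z) (h tau : R) : R :=
  h / (wgt h tau)^2 * (IZR m - b/2 * (wgt h tau)^2)^2.

(* lam is an eigenvalue of H^{b,rho}_{m,h}: the operator associated with the
   quadratic form acts as  v |-> -(1/w) (w v')' + pot v  on the weighted space
   L^2((0,delta); w dtau), with boundary conditions v'(0) = -v(0), v(delta)=0.
   An eigenfunction is a (real-valued) function v, with derivative dv, such
   that w*dv is differentiable (derivative g), solving the eigen-equation on
   [0,delta], satisfying the boundary conditions and not identically zero on
   [0,delta]. *)
Definition is_eigenvalue (b rho : R) (m : Z) (h lam : R) : Prop :=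
  exists v dv g : R -> R,
    (forall t, derivable_pt_lim v t (dv t)) /\
    (forall t, derivable_pt_lim (fun s => wgt h s * dv s) t (g t)) /\
    (forall t, 0 <= t <= delta rho h ->
        - g t / wgt h t + pot b m h t * v t = lam * v t) /\
    dv 0 = - v 0 /\
    v (delta rho h) = 0 /\
    (exists t, 0 <= t <= delta rho h /\ v t <> 0).

Definition is_lowest_eigenvalue (b rho : R) (m : Z) (h lam : R) : Prop :=
  is_eigenvalue b rho m h lam /\
  (forall mu, is_eigenvalue b rho m h mu -> lam <= mu).

(* beta = hat beta(b,A) = inf_{m in Z, |m| <= A} (m - b/2)^2
   (a minimum over a finite nonempty set when A >= 0). *)
Definition is_beta_hat (b A beta : R) : Prop :=
  (exists m : Z, Rabs (IZR m) <= A /\ beta = (IZR m - b/2)^2) /\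
  (forall m : Z, Rabs (IZR m) <= A -> beta <= (IZR m - b/2)^2).

(* Main.v *)
Require Import Defs.
From Stdlib Require Import Reals Lra Lia Psatz Factorial FunctionalExtensionality ZArith Classical.
From Coquelicot Require Import Coquelicot.
Open Scope R_scope.

Lemma isd_minus (f g : R -> R) x a b : is_derive f x a -> is_derive g x b ->
  is_derive (fun y => f y - g y) x (a - b).
Proof. intros Hf Hg. exact (is_derive_minus _ _ _ _ _ Hf Hg). Qed.
Lemma isd_plus (f g : R -> R) x a b : is_derive f x a -> is_derive g x b ->
  is_derive (fun y => f y + g y) x (a + b).
Proof. intros Hf Hg. exact (is_derive_plus _ _ _ _ _ Hf Hg). Qed.
Lemma isd_mult (f g : R -> R) x a b : is_derive f x a -> is_derive g x b ->
  is_derive (fun y => f y * g y) x (a * g x + f x * b).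
Proof. intros Hf Hg. exact (is_derive_mult _ _ _ _ _ Hf Hg (fun n m => Rmult_comm n m)). Qed.
Lemma isd_opp (f : R -> R) x a : is_derive f x a ->
  is_derive (fun y => - f y) x (- a).
Proof. intros Hf. exact (is_derive_opp _ _ _ Hf). Qed.
Lemma isd_const (c x : R) : is_derive (fun _ => c) x 0.
Proof. exact (is_derive_const c x). Qed.

Lemma mono_deriv (F dF : R -> R) x y : x <= y ->
  (forall s, x <= s <= y -> is_derive F s (dF s)) ->
  (forall s, x <= s <= y -> 0 <= dF s) -> F x <= F y.
Proof.
  intros Hxy HD Hpos.
  destruct (Req_dec x y) as [<-|Hne]; [lra|].
  destruct (MVT_cor2 F dF x y) as [c [Hc1 Hc2]]; [lra| |].
  - intros c Hc. apply is_derive_Reals. apply HD. lra.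
  - assert (0 <= dF c) by (apply Hpos; lra). nra.
Qed.

Lemma cmp_fact (D dD : R -> R) (K : R) (n : nat) : 0 <= K -> D 0 = 0 ->
  (forall s, is_derive D s (dD s)) ->
  (forall s, Rabs (dD s) <= K * (K * Rabs s)^n / INR (fact n)) ->
  forall t, Rabs (D t) <= (K * Rabs t)^(S n) / INR (fact (S n)).
Proof.
  intros HK D0 HD Hb t.
  assert (Hf : INR (fact (S n)) = INR (S n) * INR (fact n)).
  { rewrite <- mult_INR. reflexivity. }
  assert (Hfp : 0 < INR (fact n)) by (apply lt_0_INR; apply lt_O_fact).
  assert (HSn : 0 < INR (S n)) by (apply lt_0_INR; lia).
  destruct (Rle_or_lt 0 t) as [Ht|Ht].
  - set (G := fun s => (K * s)^(S n) / INR (fact (S n))).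
    set (dG := fun s => K * (K * s)^n / INR (fact n)).
    assert (HG : forall s, is_derive G s (dG s)).
    { intros s. unfold G, dG. auto_derive; [|].
      - auto.
      - replace (INR (fact n + n * fact n)) with (INR (S n) * INR (fact n))
          by (rewrite <- mult_INR; reflexivity).
        change (match n with 0%nat => 1 | S _ => INR n + 1 end) with (INR (S n)).
        field. lra. }
    assert (HG0 : G 0 = 0).
    { unfold G. rewrite Rmult_0_r, pow_i by lia. unfold Rdiv; ring. }
    assert (Hbs : forall s, 0 <= s <= t -> Rabs (dD s) <= dG s).
    { intros s Hs. unfold dG. rewrite <- (Rabs_right s) at 2 by lra. apply Hb. }
    assert (H1 : G 0 - D 0 <= G t - D t).
    { apply (mono_deriv (fun s => G s - D s) (fun s => dG s - dD s)); [lra| |].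
      - intros s _. apply isd_minus; auto.
      - intros s Hs. specialize (Hbs s Hs). apply Rabs_le_between in Hbs. lra. }
    assert (H2 : G 0 + D 0 <= G t + D t).
    { apply (mono_deriv (fun s => G s + D s) (fun s => dG s + dD s)); [lra| |].
      - intros s _. apply isd_plus; auto.
      - intros s Hs. specialize (Hbs s Hs). apply Rabs_le_between in Hbs. lra. }
    rewrite Rabs_right with (r := t) by lra.
    fold (G t). apply Rabs_le. lra.
  - set (G := fun s => (K * (- s))^(S n) / INR (fact (S n))).
    set (dG := fun s => - (K * (K * (- s))^n / INR (fact n))).
    assert (HG : forall s, is_derive G s (dG s)).
    { intros s. unfold G, dG. auto_derive; [|].
      - auto.
      - replace (INR (fact n + n * fact n)) with (INR (S n) * INR (fact n))
          by (rewrite <- mult_INR; reflexivity).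
        change (match n with 0%nat => 1 | S _ => INR n + 1 end) with (INR (S n)).
        field. lra. }
    assert (HG0 : G 0 = 0).
    { unfold G. rewrite Ropp_0, Rmult_0_r, pow_i by lia. unfold Rdiv; ring. }
    assert (Hbs : forall s, t <= s <= 0 -> Rabs (dD s) <= - dG s).
    { intros s Hs. unfold dG. rewrite Ropp_involutive.
      rewrite <- (Rabs_left1 s) by lra. apply Hb. }
    assert (H1 : - (G t - D t) <= - (G 0 - D 0)).
    { apply (mono_deriv (fun s => - (G s - D s)) (fun s => - (dG s - dD s))); [lra| |].
      - intros s _. apply isd_opp. apply isd_minus; auto.
      - intros s Hs. specialize (Hbs s Hs). apply Rabs_le_between in Hbs. lra. }
    assert (H2 : - (G t + D t) <= - (G 0 + D 0)).
    { apply (mono_deriv (fun s => - (G s + D s)) (fun s => - (dG s + dD s))); [lra| |].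
      - intros s _. apply isd_opp. apply isd_plus; auto.
      - intros s Hs. specialize (Hbs s Hs). apply Rabs_le_between in Hbs. lra. }
    rewrite Rabs_left with (r := t) by lra.
    fold (G t). apply Rabs_le. lra.
Qed.

Lemma cont_mult (f g : R -> R) x : continuous f x -> continuous g x ->
  continuous (fun y => f y * g y) x.
Proof. intros Hf Hg. exact (continuous_mult f g x Hf Hg). Qed.

Lemma prim_deriv (f : R -> R) : (forall x, continuous f x) ->
  forall t, is_derive (fun t => RInt f 0 t) t (f t).
Proof.
  intros Hf t. apply (is_derive_RInt f (fun t => RInt f 0 t) 0 t).
  - apply filter_forall. intros b. apply (@RInt_correct R_CompleteNormedModule).
    apply ex_RInt_continuous. intros z _. apply Hf.
  - apply Hf.
Qed.

Fixpoint it (a c : R -> R) (n : nat) : (R -> R) * (R -> R) :=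
  match n with
  | O => (fun _ => 1, fun _ => -1)
  | S n' => (fun t => 1 + RInt (fun s => a s * snd (it a c n') s) 0 t,
             fun t => -1 + RInt (fun s => c s * fst (it a c n') s) 0 t)
  end.

Lemma it_props (a c : R -> R) : (forall x, continuous a x) -> (forall x, continuous c x) ->
  forall n, (forall t, continuous (fst (it a c n)) t) /\ (forall t, continuous (snd (it a c n)) t)
   /\ (forall t, is_derive (fst (it a c (S n))) t (a t * snd (it a c n) t))
   /\ (forall t, is_derive (snd (it a c (S n))) t (c t * fst (it a c n) t))
   /\ fst (it a c n) 0 = 1 /\ snd (it a c n) 0 = -1.
Proof.
  intros Ha Hc.
  assert (Hd : forall n, (forall t, continuous (fst (it a c n)) t) ->
                  (forall t, continuous (snd (it a c n)) t) ->
     (forall t, is_derive (fst (it a c (S n))) t (a t * snd (it a c n) t))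
   /\ (forall t, is_derive (snd (it a c (S n))) t (c t * fst (it a c n) t))).
  { intros n H1 H2. split; intros t; simpl.
    - replace (a t * snd (it a c n) t) with (0 + a t * snd (it a c n) t) by ring.
      apply isd_plus. apply isd_const. apply (prim_deriv (fun s => a s * snd (it a c n) s)).
      intros x. apply cont_mult; auto.
    - replace (c t * fst (it a c n) t) with (0 + c t * fst (it a c n) t) by ring.
      apply isd_plus. apply isd_const. apply (prim_deriv (fun s => c s * fst (it a c n) s)).
      intros x. apply cont_mult; auto. }
  intros n; induction n as [|n IH].
  - assert (H1 : forall t, continuous (fst (it a c 0)) t) by (intros; apply continuous_const).
    assert (H2 : forall t, continuous (snd (it a c 0)) t) by (intros; apply continuous_const).
    destruct (Hd 0%nat H1 H2).
    refine (conj H1 (conj H2 (conj H (conj H0 (conj _ _))))); reflexivity.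
  - destruct IH as [H1 [H2 [H3 [H4 _]]]].
    assert (H1' : forall t, continuous (fst (it a c (S n))) t)
      by (intros; apply (@ex_derive_continuous R_AbsRing R_NormedModule); eexists; apply H3).
    assert (H2' : forall t, continuous (snd (it a c (S n))) t)
      by (intros; apply (@ex_derive_continuous R_AbsRing R_NormedModule); eexists; apply H4).
    destruct (Hd (S n) H1' H2').
    refine (conj H1' (conj H2' (conj H (conj H0 (conj _ _))))).
    + simpl. rewrite RInt_point. unfold zero; simpl. ring.
    + simpl. rewrite RInt_point. unfold zero; simpl. ring.
Qed.

Lemma it_diff (a c : R -> R) (K : R) : (forall x, continuous a x) -> (forall x, continuous c x) ->
  0 <= K -> (forall x, Rabs (a x) <= K) -> (forall x, Rabs (c x) <= K) ->
  forall n t, Rabs (fst (it a c (S n)) t - fst (it a c n) t) <= (K * Rabs t)^(S n) / INR (fact (S n))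
    /\ Rabs (snd (it a c (S n)) t - snd (it a c n) t) <= (K * Rabs t)^(S n) / INR (fact (S n)).
Proof.
  intros Ha Hc HK Hab Hcb.
  pose proof (it_props a c Ha Hc) as HP.
  intros n; induction n as [|n IH]; intros t.
  - destruct (HP 0%nat) as [_ [_ [H3 [H4 [H5 H6]]]]].
    destruct (HP 1%nat) as [_ [_ [_ [_ [H7 H8]]]]].
    split.
    + apply (cmp_fact (fun t => fst (it a c 1) t - fst (it a c 0) t) (fun t => a t * snd (it a c 0) t - 0) K 0); [exact HK| | |].
      * cbv beta; lra.
      * intros s. exact (isd_minus (fst (it a c 1)) (fst (it a c 0)) s _ _ (H3 s) (isd_const 1 s)).
      * intros s. change (snd (it a c 0) s) with (-1). change ((K * Rabs s)^0) with 1.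
        change (INR (fact 0)) with 1.
        replace (a s * -1 - 0) with (- a s) by ring. rewrite Rabs_Ropp. specialize (Hab s). lra.
    + apply (cmp_fact (fun t => snd (it a c 1) t - snd (it a c 0) t) (fun t => c t * fst (it a c 0) t - 0) K 0); [exact HK| | |].
      * cbv beta; lra.
      * intros s. exact (isd_minus (snd (it a c 1)) (snd (it a c 0)) s _ _ (H4 s) (isd_const (-1) s)).
      * intros s. change (fst (it a c 0) s) with 1. change ((K * Rabs s)^0) with 1.
        change (INR (fact 0)) with 1.
        replace (c s * 1 - 0) with (c s) by ring. specialize (Hcb s). lra.
  - destruct (HP n) as [_ [_ [H3 [H4 [H5 H6]]]]].
    destruct (HP (S n)) as [_ [_ [H3' [H4' [H5' H6']]]]].
    destruct (HP (S (S n))) as [_ [_ [_ [_ [H5'' H6'']]]]].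
    split.
    + apply (cmp_fact (fun t => fst (it a c (S (S n))) t - fst (it a c (S n)) t)
        (fun t => a t * snd (it a c (S n)) t - a t * snd (it a c n) t) K (S n)); [exact HK| | |].
      * cbv beta; lra.
      * intros s. exact (isd_minus (fst (it a c (S (S n)))) (fst (it a c (S n))) s _ _ (H3' s) (H3 s)).
      * intros s. replace (a s * snd (it a c (S n)) s - a s * snd (it a c n) s)
          with (a s * (snd (it a c (S n)) s - snd (it a c n) s)) by ring.
        rewrite Rabs_mult. destruct (IH s) as [_ Hs].
        unfold Rdiv. rewrite Rmult_assoc. apply Rmult_le_compat; [apply Rabs_pos|apply Rabs_pos| |exact Hs]. first [apply Hab|apply Hcb].
    + apply (cmp_fact (fun t => snd (it a c (S (S n))) t - snd (it a c (S n)) t)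
        (fun t => c t * fst (it a c (S n)) t - c t * fst (it a c n) t) K (S n)); [exact HK| | |].
      * cbv beta; lra.
      * intros s. exact (isd_minus (snd (it a c (S (S n)))) (snd (it a c (S n))) s _ _ (H4' s) (H4 s)).
      * intros s. replace (c s * fst (it a c (S n)) s - c s * fst (it a c n) s)
          with (c s * (fst (it a c (S n)) s - fst (it a c n) s)) by ring.
        rewrite Rabs_mult. destruct (IH s) as [Hs _].
        unfold Rdiv. rewrite Rmult_assoc. apply Rmult_le_compat; [apply Rabs_pos|apply Rabs_pos| |exact Hs]. first [apply Hab|apply Hcb].
Qed.

Lemma pow_fact_exp x k : 0 <= x -> x^k / INR (fact k) <= exp x.
Proof.
  intros Hx. eapply Rle_trans; [|apply (exp_ge_taylor x k Hx)].
  assert (Hnn : forall j, 0 <= x ^ j / INR (fact j)).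
  { intros j. apply Rle_mult_inv_pos. apply pow_le; auto. apply lt_0_INR, lt_O_fact. }
  destruct k as [|k].
  - simpl. lra.
  - rewrite tech5. assert (0 <= sum_f_R0 (fun k0 : nat => x ^ k0 / INR (fact k0)) k)
      by (apply cond_pos_sum; auto). lra.
Qed.

Lemma bound_fact K T x k : 0 <= K -> Rabs x <= T ->
  (K * Rabs x)^k / INR (fact k) <= exp (2 * K * T) * (/2)^k.
Proof.
  intros HK Hx.
  assert (Hf : 0 < INR (fact k)) by (apply lt_0_INR, lt_O_fact).
  assert (H1 : (K * Rabs x)^k <= (K * T)^k).
  { apply pow_incr. split. apply Rmult_le_pos; auto; apply Rabs_pos. apply Rmult_le_compat_l; auto. }
  assert (H2 : (K * T)^k = (2 * K * T)^k * (/2)^k).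
  { rewrite <- Rpow_mult_distr. f_equal. field. }
  assert (H3 : (2 * K * T)^k / INR (fact k) <= exp (2 * K * T)).
  { apply pow_fact_exp. assert (0 <= T) by (pose proof (Rabs_pos x); lra). nra. }
  assert (Hp : 0 <= (/2)^k) by (apply pow_le; lra).
  apply Rle_trans with ((K * T)^k / INR (fact k)).
  { unfold Rdiv. apply Rmult_le_compat_r; auto. left; apply Rinv_0_lt_compat; auto. }
  rewrite H2. unfold Rdiv in *. 
  replace ((2 * K * T) ^ k * (/ 2) ^ k * / INR (fact k)) with (((2 * K * T) ^ k * / INR (fact k)) * (/ 2) ^ k) by ring.
  apply Rmult_le_compat_r; auto.
Qed.

Lemma small_geo M eps : 0 <= M -> 0 < eps -> exists N, forall n, (N <= n)%nat -> M * (/2)^n < eps.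
Proof.
  intros HM He.
  destruct (pow_lt_1_zero (/2)) with (y := eps / (M + 1)) as [N HN].
  { rewrite Rabs_right; lra. }
  { apply Rdiv_lt_0_compat; lra. }
  exists N. intros n Hn. specialize (HN n Hn). rewrite Rabs_right in HN by (apply Rle_ge, pow_le; lra).
  assert (Hp : 0 <= (/2)^n) by (apply pow_le; lra).
  apply Rle_lt_trans with ((M+1) * (/2)^n). nra.
  apply Rmult_lt_reg_l with (/ (M+1)). apply Rinv_0_lt_compat; lra.
  rewrite <- Rmult_assoc, Rinv_l by lra. unfold Rdiv in HN. lra.
Qed.

Lemma geo_lim (u : nat -> R) C : 0 <= C -> (forall n, Rabs (u (S n) - u n) <= C * (/2)^n) ->
  exists l : R, Lim_seq u = Finite l /\ forall n, Rabs (u n - l) <= 2 * C * (/2)^n.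
Proof.
  intros HC Hu.
  assert (Hk : forall n k, Rabs (u (n + k)%nat - u n) <= 2 * C * (/2)^n - 2 * C * (/2)^(n+k)).
  { intros n k. induction k as [|k IH].
    - rewrite Nat.add_0_r. unfold Rminus. rewrite Rplus_opp_r, Rabs_R0. lra.
    - replace (u (n + S k)%nat - u n) with ((u (S (n + k)) - u (n + k)%nat) + (u (n+k)%nat - u n))
        by (rewrite Nat.add_succ_r; ring).
      eapply Rle_trans; [apply Rabs_triang|].
      specialize (Hu (n+k)%nat).
      rewrite Nat.add_succ_r. simpl pow at 2. lra. }
  assert (Hk' : forall n m, (n <= m)%nat -> Rabs (u m - u n) <= 2 * C * (/2)^n).
  { intros n m Hnm. replace m with (n + (m - n))%nat by lia.
    specialize (Hk n (m - n)%nat).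
    assert (0 <= (/2)^(n + (m-n))) by (apply pow_le; lra). nra. }
  assert (Hex : ex_finite_lim_seq u).
  { apply ex_lim_seq_cauchy_corr. intros eps.
    destruct (small_geo (4 * C) eps) as [N HN]; [lra|apply cond_pos|].
    exists N. intros n m Hn Hm.
    specialize (HN N (le_n N)).
    pose proof (Hk' N n Hn). pose proof (Hk' N m Hm).
    replace (u n - u m) with ((u n - u N) - (u m - u N)) by ring.
    eapply Rle_lt_trans; [apply Rabs_triang|]. rewrite Rabs_Ropp. lra. }
  destruct Hex as [l Hl].
  exists l. split; [apply is_lim_seq_unique; auto|].
  intros n. apply Rabs_le.
  assert (Hev1 : eventually (fun m => u m <= u n + 2 * C * (/2)^n)).
  { exists n. intros m Hm. specialize (Hk' n m Hm). apply Rabs_le_between in Hk'. lra. }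
  assert (Hev2 : eventually (fun m => u n - 2 * C * (/2)^n <= u m)).
  { exists n. intros m Hm. specialize (Hk' n m Hm). apply Rabs_le_between in Hk'. lra. }
  pose proof (is_lim_seq_le_loc _ _ _ _ Hev1 Hl (is_lim_seq_const (u n + 2 * C * (/2)^n))) as H1.
  pose proof (is_lim_seq_le_loc _ _ _ _ Hev2 (is_lim_seq_const (u n - 2 * C * (/2)^n)) Hl) as H2.
  simpl in H1, H2. lra.
Qed.

Lemma it_unif (a c : R -> R) (K T : R) : (forall x, continuous a x) -> (forall x, continuous c x) ->
  0 <= K -> (forall x, Rabs (a x) <= K) -> (forall x, Rabs (c x) <= K) ->
  forall x, Rabs x <= T ->
  (exists l, Lim_seq (fun n => fst (it a c n) x) = Finite l /\
     forall n, Rabs (fst (it a c n) x - l) <= 2 * exp (2 * K * T) * (/2)^n) /\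
  (exists l, Lim_seq (fun n => snd (it a c n) x) = Finite l /\
     forall n, Rabs (snd (it a c n) x - l) <= 2 * exp (2 * K * T) * (/2)^n).
Proof.
  intros Ha Hc HK Hab Hcb x Hx.
  pose proof (it_diff a c K Ha Hc HK Hab Hcb) as HD.
  assert (Hb : forall n, (K * Rabs x)^(S n) / INR (fact (S n)) <= exp (2 * K * T) * (/2)^n).
  { intros n. eapply Rle_trans; [apply bound_fact; eauto|].
    assert (0 < exp (2*K*T)) by apply exp_pos.
    assert (0 <= (/2)^n) by (apply pow_le; lra).
    simpl. nra. }
  assert (HE : 0 <= exp (2 * K * T)) by (left; apply exp_pos).
  split.
  - apply geo_lim; auto. intros n. destruct (HD n x). eapply Rle_trans; eauto.
  - apply geo_lim; auto. intros n. destruct (HD n x). eapply Rle_trans; eauto.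
Qed.

Definition solv (a c : R -> R) (t : R) : R := real (Lim_seq (fun n => fst (it a c n) t)).
Definition solp (a c : R -> R) (t : R) : R := real (Lim_seq (fun n => snd (it a c n) t)).

Lemma ode_exists (a c : R -> R) (K : R) : (forall x, continuous a x) -> (forall x, continuous c x) ->
  0 <= K -> (forall x, Rabs (a x) <= K) -> (forall x, Rabs (c x) <= K) ->
  (forall t, is_derive (solv a c) t (a t * solp a c t)) /\
  (forall t, is_derive (solp a c) t (c t * solv a c t)) /\
  solv a c 0 = 1 /\ solp a c 0 = -1.
Proof.
  intros Ha Hc HK Hab Hcb.
  pose proof (it_props a c Ha Hc) as HP.
  assert (HU : forall T x, Rabs x <= T -> forall n,
     Rabs (fst (it a c n) x - solv a c x) <= 2 * exp (2 * K * T) * (/2)^n /\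
     Rabs (snd (it a c n) x - solp a c x) <= 2 * exp (2 * K * T) * (/2)^n /\
     Lim_seq (fun n => fst (it a c n) x) = Finite (solv a c x) /\
     Lim_seq (fun n => snd (it a c n) x) = Finite (solp a c x)).
  { intros T x Hx n. destruct (it_unif a c K T Ha Hc HK Hab Hcb x Hx) as [[l1 [E1 B1]] [l2 [E2 B2]]].
    unfold solv, solp. rewrite E1, E2. simpl. auto. }
  assert (Hder : forall (f : nat -> R -> R) (g : R -> R) (fl : R -> R) (gn : nat -> R -> R) (gl : R -> R),
     (forall n t, is_derive (f n) t (gn n t)) ->
     (forall n t, continuous (gn n) t) ->
     (forall T x, Rabs x <= T -> forall n, Rabs (f n x - fl x) <= 2 * exp (2 * K * T) * (/2)^n
          /\ Lim_seq (fun n => f n x) = Finite (fl x)) ->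
     (forall T x, Rabs x <= T -> forall n, Rabs (gn n x - gl x) <= K * (2 * exp (2 * K * T) * (/2)^n)
          /\ Lim_seq (fun n => gn n x) = Finite (gl x)) ->
     forall x, is_derive fl x (gl x)).
  { intros f g fl gn gl Hfd Hgc Hfu Hgu x.
    set (T := Rabs x + 1).
    set (D := fun y => - T < y /\ y < T).
    assert (HDx : D x).
    { unfold D, T. split; [|pose proof (Rle_abs x); lra].
      pose proof (Rle_abs (-x)). rewrite Rabs_Ropp in H. lra. }
    assert (HDb : forall y, D y -> Rabs y <= T).
    { intros y [H1 H2]. apply Rabs_le. lra. }
    assert (HDf : forall n y, Derive (f n) y = gn n y).
    { intros n y. apply is_derive_unique. apply Hfd. }
    assert (HC := CVU_Derive f D).
    assert (Hop : open D) by (apply open_and; [apply open_gt|apply open_lt]).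
    assert (Hcon : is_connected D).
    { intros a0 b0 y [Ha1 Ha2] [Hb1 Hb2] Hy. split; lra. }
    assert (HE : 0 <= exp (2 * K * T)) by (left; apply exp_pos).
    assert (Hcvu1 : CVU_dom f D).
    { intros eps. destruct (small_geo (2 * exp (2 * K * T)) eps) as [N HN]; [lra|apply cond_pos|].
      exists N. intros n Hn y Hy.
      destruct (Hfu T y (HDb y Hy) n) as [B E]. rewrite E. simpl.
      eapply Rle_lt_trans; [exact B|]. apply HN; auto. }
    assert (Hcvu2 : CVU_dom (fun n y => Derive (f n) y) D).
    { intros eps. destruct (small_geo (K * (2 * exp (2 * K * T))) eps) as [N HN];
        [apply Rmult_le_pos; lra|apply cond_pos|].
      exists N. intros n Hn y Hy.
      rewrite (Lim_seq_ext _ (fun n => gn n y)) by (intros; apply HDf).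
      rewrite HDf.
      destruct (Hgu T y (HDb y Hy) n) as [B E]. rewrite E. simpl.
      eapply Rle_lt_trans; [exact B|]. rewrite <- Rmult_assoc. apply HN; auto. }
    specialize (HC Hop Hcon Hcvu1).
    assert (Hex : forall n y, D y -> ex_derive (f n) y) by (intros n y _; eexists; apply Hfd).
    assert (Hcp : forall n y, D y -> continuity_pt (Derive (f n)) y).
    { intros n y _. apply continuity_pt_filterlim.
      apply (continuous_ext (gn n)). intros z; symmetry; apply HDf. apply Hgc. }
    specialize (HC Hex Hcp Hcvu2 x HDx).
    rewrite (Lim_seq_ext _ (fun n => gn n x)) in HC by (intros; apply HDf).
    destruct (Hgu T x (HDb x HDx) 0%nat) as [_ E]. rewrite E in HC. simpl in HC.
    apply (is_derive_ext (fun y => real (Lim_seq (fun n => f n y)))); [|exact HC].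
    intros y. destruct (Hfu (Rabs y) y (Rle_refl _) 0%nat) as [_ E']. rewrite E'. reflexivity. }
  split; [|split; [|split]].
  - apply (Hder (fun n => fst (it a c (S n))) (fun _ => 0) (solv a c)
       (fun n t => a t * snd (it a c n) t) (fun t => a t * solp a c t)).
    + intros n t. apply HP.
    + intros n t. apply cont_mult; [apply Ha|apply HP].
    + intros T x Hx n. destruct (HU T x Hx (S n)) as [B [_ [E _]]]. split.
      * eapply Rle_trans; [exact B|]. assert (0 < exp (2*K*T)) by apply exp_pos.
        assert (0 <= (/2)^n) by (apply pow_le; lra). simpl. nra.
      * rewrite Lim_seq_incr_1 with (u := fun n => fst (it a c n) x). exact E.
    + intros T x Hx n. destruct (HU T x Hx n) as [_ [B [_ E]]]. split.
      * replace (a x * snd (it a c n) x - a x * solp a c x) with (a x * (snd (it a c n) x - solp a c x)) by ring.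
        rewrite Rabs_mult. apply Rmult_le_compat; auto; apply Rabs_pos.
      * rewrite Lim_seq_scal_l, E. reflexivity.
  - apply (Hder (fun n => snd (it a c (S n))) (fun _ => 0) (solp a c)
       (fun n t => c t * fst (it a c n) t) (fun t => c t * solv a c t)).
    + intros n t. apply HP.
    + intros n t. apply cont_mult; [apply Hc|apply HP].
    + intros T x Hx n. destruct (HU T x Hx (S n)) as [_ [B [_ E]]]. split.
      * eapply Rle_trans; [exact B|]. assert (0 < exp (2*K*T)) by apply exp_pos.
        assert (0 <= (/2)^n) by (apply pow_le; lra). simpl. nra.
      * rewrite Lim_seq_incr_1 with (u := fun n => snd (it a c n) x). exact E.
    + intros T x Hx n. destruct (HU T x Hx n) as [B [_ [E _]]]. split.
      * replace (c x * fst (it a c n) x - c x * solv a c x) with (c x * (fst (it a c n) x - solv a c x)) by ring.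
        rewrite Rabs_mult. apply Rmult_le_compat; auto; apply Rabs_pos.
      * rewrite Lim_seq_scal_l, E. reflexivity.
  - unfold solv. rewrite (Lim_seq_ext _ (fun _ => 1)). rewrite Lim_seq_const. reflexivity.
    intros n. apply HP.
  - unfold solp. rewrite (Lim_seq_ext _ (fun _ => -1)). rewrite Lim_seq_const. reflexivity.
    intros n. apply HP.
Qed.

Lemma ballR (x y e : R) : ball x e y <-> Rabs (y - x) < e.
Proof. reflexivity. Qed.

Lemma lip_cont (f : R -> R) (L : R) x : 0 < L -> (forall y z, Rabs (f y - f z) <= L * Rabs (y - z)) -> continuous f x.
Proof.
  intros HL Hf. apply filterlim_locally. intros eps.
  assert (He : 0 < eps / L) by (apply Rdiv_lt_0_compat; [apply cond_pos|auto]).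
  exists (mkposreal _ He). intros y Hy. apply ballR. apply ballR in Hy. simpl in Hy.
  eapply Rle_lt_trans; [apply Hf|].
  replace (pos eps) with (L * (eps / L)) by (field; lra).
  apply Rmult_lt_compat_l; auto.
Qed.

Lemma quad_deriv (f : R -> R) t r C : 0 < r -> 0 <= C ->
  (forall y, Rabs (y - t) < r -> Rabs (f y - f t) <= C * (y - t)^2) -> is_derive f t 0.
Proof.
  intros Hr HC Hf. apply is_derive_Reals. intros eps Heps.
  assert (Hd : 0 < Rmin r (eps / (C + 1))).
  { apply Rmin_pos; auto. apply Rdiv_lt_0_compat; lra. }
  exists (mkposreal _ Hd). intros hh Hh0 Hh. simpl in Hh.
  assert (H1 : Rabs hh < r) by (eapply Rlt_le_trans; [exact Hh|apply Rmin_l]).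
  assert (H2 : Rabs hh < eps / (C+1)) by (eapply Rlt_le_trans; [exact Hh|apply Rmin_r]).
  specialize (Hf (t + hh)). replace (t + hh - t) with hh in Hf by ring.
  specialize (Hf H1).
  rewrite Rminus_0_r. unfold Rdiv. rewrite Rabs_mult, Rabs_inv.
  assert (Hp : 0 < Rabs hh) by (apply Rabs_pos_lt; auto).
  apply Rle_lt_trans with (C * hh^2 * / Rabs hh).
  { apply Rmult_le_compat_r; [left; apply Rinv_0_lt_compat; auto|auto]. }
  replace (C * hh^2 * / Rabs hh) with (C * Rabs hh).
  2:{ rewrite <- (Rabs_sqr hh) at 1 || idtac. rewrite <- Rsqr_pow2. unfold Rsqr.
      rewrite <- (Rabs_right (hh*hh)) by (apply Rle_ge; nra). rewrite Rabs_mult. field. lra. }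
  apply Rle_lt_trans with ((C + 1) * Rabs hh). nra.
  replace eps with ((C+1) * (eps / (C+1))) by (field; lra).
  apply Rmult_lt_compat_l; lra.
Qed.

Definition Qf (s : R) := (1 - s^2)^2.
Definition dQf (s : R) := -4 * s * (1 - s^2).
Definition sig (d t : R) := Rmax 0 (Rmin ((t - d)/d) 1).
Definition chi (d t : R) := Qf (sig d t).
Definition dchi (d t : R) := dQf (sig d t) / d.

Lemma sig_range d t : 0 <= sig d t <= 1.
Proof. unfold sig. split; [apply Rmax_l|]. apply Rmax_lub; [lra|apply Rmin_r]. Qed.

Lemma chi_range d t : 0 <= chi d t <= 1.
Proof. unfold chi, Qf. pose proof (sig_range d t) as [H1 H2]. split. apply pow2_ge_0.
  set (s := sig d t) in *. assert (0 <= 1 - s^2 <= 1) by (simpl; nra).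
  simpl. nra. Qed.

Lemma sig_low d t : 0 < d -> t <= d -> sig d t = 0.
Proof. intros Hd Ht. unfold sig. assert ((t - d)/d <= 0).
  { unfold Rdiv. apply Rmult_le_0_r; [lra|left; apply Rinv_0_lt_compat; lra]. }
  rewrite Rmin_left by lra. rewrite Rmax_left by lra. reflexivity. Qed.

Lemma sig_high d t : 0 < d -> 2 * d <= t -> sig d t = 1.
Proof. intros Hd Ht. unfold sig. assert (1 <= (t - d)/d).
  { apply Rmult_le_reg_r with d; auto. unfold Rdiv. rewrite Rmult_assoc, Rinv_l; lra. }
  rewrite Rmin_right by lra. rewrite Rmax_right by lra. reflexivity. Qed.

Lemma sig_mid d t : 0 < d -> d <= t <= 2 * d -> sig d t = (t - d) / d.
Proof. intros Hd Ht. unfold sig.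
  assert (0 <= (t - d)/d <= 1).
  { split. apply Rdiv_le_0_compat; lra.
    apply Rmult_le_reg_r with d; auto. unfold Rdiv. rewrite Rmult_assoc, Rinv_l; lra. }
  rewrite Rmin_left by lra. rewrite Rmax_right by lra. reflexivity. Qed.

Lemma chi_low d t : 0 < d -> t <= d -> chi d t = 1.
Proof. intros. unfold chi. rewrite sig_low by auto. unfold Qf. ring. Qed.
Lemma chi_high d t : 0 < d -> 2 * d <= t -> chi d t = 0.
Proof. intros. unfold chi. rewrite sig_high by auto. unfold Qf. ring. Qed.
Lemma dchi_low d t : 0 < d -> t <= d -> dchi d t = 0.
Proof. intros. unfold dchi. rewrite sig_low by auto. unfold dQf. field. lra. Qed.

Lemma chi_deriv d t : 0 < d -> is_derive (chi d) t (dchi d t).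
Proof.
  intros Hd.
  destruct (Rtotal_order t d) as [Ht|[Ht|Ht]].
  -
    rewrite dchi_low by lra.
    apply (is_derive_ext_loc (fun _ => 1)); [|apply isd_const].
    assert (He : 0 < d - t) by lra. exists (mkposreal _ He). intros y Hy.
    change (Rabs (y - t) < d - t) in Hy. symmetry. apply chi_low; auto.
    apply Rabs_lt_between in Hy. lra.
  -
    subst t. rewrite dchi_low by lra.
    apply (quad_deriv _ d d (2 / (d*d))); [lra| |].
    { apply Rdiv_le_0_compat; [lra|apply Rmult_lt_0_compat; lra]. }
    intros y Hy. rewrite (chi_low d d) by lra. unfold chi, Qf.
    pose proof (sig_range d y) as [S1 S2].
    assert (Hs : sig d y <= Rabs (y - d) / d).
    { destruct (Rle_or_lt y d). rewrite sig_low by auto. apply Rdiv_le_0_compat; [apply Rabs_pos|lra].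
      destruct (Rle_or_lt y (2*d)).
      - rewrite sig_mid by lra. rewrite Rabs_right by lra. lra.
      - rewrite sig_high by lra. rewrite Rabs_right by lra.
        apply Rmult_le_reg_r with d; auto. unfold Rdiv. rewrite Rmult_assoc, Rinv_l; lra. }
    set (s := sig d y) in *.
    assert (Hs2 : s^2 <= (y - d)^2 / (d*d)).
    { assert (Hq : (y - d)^2/(d*d) = (Rabs (y - d)/d)^2) by (rewrite <- pow2_abs; field; lra).
      rewrite Hq. apply pow_incr; lra. }
    replace ((1 - s^2)^2 - 1) with (s^2 * (s^2 - 2)) by ring.
    rewrite Rabs_mult, Rabs_right by (apply Rle_ge; nra).
    rewrite Rabs_left1 by nra.
    assert (0 <= s^2) by nra.
    replace (2 / (d*d) * (y - d)^2) with (2 * ((y - d)^2 / (d*d))) by (field; lra).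
    nra.
  - destruct (Rtotal_order t (2*d)) as [Ht2|[Ht2|Ht2]].
    +
      apply (is_derive_ext_loc (fun y => Qf ((y - d)/d))).
      { assert (He : 0 < Rmin (t - d) (2*d - t)) by (apply Rmin_pos; lra).
        exists (mkposreal _ He). intros y Hy. change (Rabs (y - t) < Rmin (t - d) (2*d - t)) in Hy.
        apply Rabs_lt_between in Hy. pose proof (Rmin_l (t-d) (2*d-t)). pose proof (Rmin_r (t-d) (2*d-t)).
        unfold chi. rewrite sig_mid; auto. lra. }
      unfold dchi. rewrite sig_mid by lra. unfold Qf, dQf. auto_derive; auto. field. lra.
    + subst t. assert (dchi d (2*d) = 0) as ->.
      { unfold dchi. rewrite sig_high by lra. unfold dQf. field. lra. }
      apply (quad_deriv _ (2*d) d (4 / (d*d))); [lra| |].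
      { apply Rdiv_le_0_compat; [lra|apply Rmult_lt_0_compat; lra]. }
      intros y Hy. rewrite (chi_high d (2*d)) by lra. unfold chi, Qf.
      pose proof (sig_range d y) as [S1 S2].
      assert (Hs : 1 - sig d y <= Rabs (y - 2 * d) / d).
      { destruct (Rle_or_lt (2*d) y). rewrite sig_high by auto. unfold Rminus at 1. rewrite Rplus_opp_r.
        apply Rdiv_le_0_compat; [apply Rabs_pos|lra].
        destruct (Rle_or_lt d y).
        - rewrite sig_mid by lra. rewrite Rabs_left by lra.
          apply Rmult_le_reg_r with d; auto. unfold Rdiv. rewrite Rmult_assoc, Rinv_l by lra.
          rewrite Rmult_minus_distr_r, Rmult_assoc, Rinv_l; lra.
        - rewrite sig_low by lra. rewrite Rabs_left by lra.
          apply Rmult_le_reg_r with d; auto. unfold Rdiv. rewrite Rmult_assoc, Rinv_l; lra. }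
      set (s := sig d y) in *.
      assert (Hs2 : (1 - s)^2 <= (y - 2 * d)^2 / (d*d)).
      { assert (Hq : (y - 2 * d)^2/(d*d) = (Rabs (y - 2 * d)/d)^2) by (rewrite <- pow2_abs; field; lra).
        rewrite Hq. apply pow_incr; lra. }
      replace ((1 - s^2)^2 - 0) with ((1 - s)^2 * (1 + s)^2) by ring.
      rewrite Rabs_right by (apply Rle_ge; apply Rmult_le_pos; apply pow2_ge_0).
      replace (4 / (d*d) * (y - 2 * d)^2) with (4 * ((y - 2 * d)^2 / (d*d))) by (field; lra).
      assert ((1 + s)^2 <= 4) by (simpl; nra). assert (0 <= (1 - s)^2) by apply pow2_ge_0. nra.
    + assert (dchi d t = 0) as ->.
      { unfold dchi. rewrite sig_high by lra. unfold dQf. field. lra. }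
      apply (is_derive_ext_loc (fun _ => 0)); [|apply isd_const].
      assert (He : 0 < t - 2 * d) by lra. exists (mkposreal _ He). intros y Hy.
      change (Rabs (y - t) < t - 2 * d) in Hy. symmetry. apply chi_high; auto.
      apply Rabs_lt_between in Hy. lra.
Qed.

Definition aco (rho h : R) (t : R) := chi (delta rho h) t / wgt h (Rmin t (2 * delta rho h)).
Definition clp (rho h t : R) := Rmax 0 (Rmin t (delta rho h)).
Definition cco (b rho : R) (m : Z) (h lam t : R) :=
  wgt h (clp rho h t) * (pot b m h (clp rho h t) - lam).

Lemma min_lip c x y : Rabs (Rmin x c - Rmin y c) <= 1 * Rabs (x - y).
Proof. unfold Rmin; destruct (Rle_dec x c), (Rle_dec y c); split_Rabs; lra. Qed.
Lemma clp_lip rho h x y : Rabs (clp rho h x - clp rho h y) <= 1 * Rabs (x - y).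
Proof. unfold clp, Rmax, Rmin; destruct (Rle_dec x (delta rho h)), (Rle_dec y (delta rho h));
  repeat match goal with |- context [Rle_dec ?a ?b] => destruct (Rle_dec a b) end; split_Rabs; lra. Qed.

Lemma clp_range rho h t : 0 <= delta rho h -> 0 <= clp rho h t <= delta rho h.
Proof. intros Hd. unfold clp. split; [apply Rmax_l|]. apply Rmax_lub; [auto|apply Rmin_r]. Qed.
Lemma clp_id rho h t : 0 <= t <= delta rho h -> clp rho h t = t.
Proof. intros Ht. unfold clp. rewrite Rmin_left by lra. rewrite Rmax_right by lra. reflexivity. Qed.

Record Hyp (b rho h : R) : Prop := mkHyp {
  hyp_h : 0 < h ;
  hyp_b : 0 < b ;
  hyp_d : 0 < delta rho h ;
  hyp_ed : sqrt h * delta rho h <= 1/3 }.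

Lemma sqrt_pos' h : 0 < h -> 0 < sqrt h.
Proof. intros; apply sqrt_lt_R0; auto. Qed.

Lemma w_lb b rho h t : Hyp b rho h -> t <= 2 * delta rho h -> 1/3 <= wgt h t.
Proof. intros [Hh Hb Hd Hed] Ht. unfold wgt. pose proof (sqrt_pos' h Hh).
  assert (sqrt h * t <= sqrt h * (2 * delta rho h)) by (apply Rmult_le_compat_l; lra). lra. Qed.

Lemma w_int b rho h t : Hyp b rho h -> 0 <= t <= delta rho h -> 2/3 <= wgt h t <= 1.
Proof. intros [Hh Hb Hd Hed] Ht. unfold wgt. pose proof (sqrt_pos' h Hh).
  assert (sqrt h * t <= sqrt h * delta rho h) by (apply Rmult_le_compat_l; lra).
  assert (0 <= sqrt h * t) by (apply Rmult_le_pos; lra). lra. Qed.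

Lemma exd_G b m h lam (s : R) : 0 < wgt h s ->
  ex_derive (fun s => wgt h s * (pot b m h s - lam)) s.
Proof. intros Hw. unfold pot, wgt in *. auto_derive.
  assert (0 < (1 + - (sqrt h * s)) * ((1 + - (sqrt h * s)) * 1)) by (rewrite Rmult_1_r; apply Rmult_lt_0_compat; lra).
  lra. Qed.
Lemma exd_inv h (s : R) : 0 < wgt h s -> ex_derive (fun s => / wgt h s) s.
Proof. intros Hw. unfold wgt in *. auto_derive. lra. Qed.

Lemma aco_cont b rho h : Hyp b rho h -> forall t, continuous (aco rho h) t.
Proof.
  intros HH t. pose proof HH as [Hh Hb Hd Hed].
  unfold aco, Rdiv. apply cont_mult.
  - apply (@ex_derive_continuous R_AbsRing R_NormedModule). eexists. apply chi_deriv. auto.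
  - apply (continuous_comp (fun t => Rmin t (2 * delta rho h)) (fun s => / wgt h s)).
    + apply (lip_cont _ 1); [lra|]. intros; apply min_lip.
    + assert (Hw : 1/3 <= wgt h (Rmin t (2 * delta rho h))) by (apply (w_lb b rho); auto; apply Rmin_r).
      apply (@ex_derive_continuous R_AbsRing R_NormedModule). apply exd_inv. lra.
Qed.

Lemma cco_cont b rho m h lam : Hyp b rho h -> forall t, continuous (cco b rho m h lam) t.
Proof.
  intros HH t. pose proof HH as [Hh Hb Hd Hed].
  unfold cco. apply (continuous_comp (clp rho h) (fun s => wgt h s * (pot b m h s - lam))).
  - apply (lip_cont _ 1); [lra|]. intros; apply clp_lip.
  - assert (Hw : 2/3 <= wgt h (clp rho h t)) by (apply (w_int b rho); auto; apply clp_range; lra).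
    apply (@ex_derive_continuous R_AbsRing R_NormedModule). apply exd_G. lra.
Qed.

Lemma aco_bound b rho h : Hyp b rho h -> forall t, Rabs (aco rho h t) <= 3.
Proof.
  intros HH t. unfold aco.
  assert (Hw : 1/3 <= wgt h (Rmin t (2 * delta rho h))) by (apply (w_lb b rho); auto; apply Rmin_r).
  pose proof (chi_range (delta rho h) t).
  rewrite Rabs_right.
  2:{ apply Rle_ge, Rdiv_le_0_compat; lra. }
  apply Rmult_le_reg_r with (wgt h (Rmin t (2 * delta rho h))); [lra|].
  unfold Rdiv. rewrite Rmult_assoc, Rinv_l by lra. lra.
Qed.

Definition Kc (b : R) (m : Z) (h lam : R) := 3 * h * (Rabs (IZR m) + b)^2 + Rabs lam.

Lemma pot_bound b rho m h s : Hyp b rho h -> 0 <= s <= delta rho h ->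
  0 <= pot b m h s <= 3 * h * (Rabs (IZR m) + b)^2.
Proof.
  intros HH Hs. pose proof HH as [Hh Hb Hd Hed].
  pose proof (w_int b rho h s HH Hs) as Hw. unfold pot.
  set (w := wgt h s) in *.
  assert (HX : Rabs (IZR m - b/2 * w^2) <= Rabs (IZR m) + b).
  { eapply Rle_trans; [apply Rabs_triang|]. rewrite Rabs_Ropp.
    rewrite (Rabs_right (b/2 * w^2)). 2:{ apply Rle_ge. apply Rmult_le_pos; [lra|apply pow2_ge_0]. }
    assert (w^2 <= 1) by (simpl; nra). nra. }
  assert (HX2 : (IZR m - b/2 * w^2)^2 <= (Rabs (IZR m) + b)^2).
  { rewrite <- pow2_abs. apply pow_incr. split; [apply Rabs_pos|auto]. }
  assert (Hw2 : 4/9 <= w^2) by (simpl; nra).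
  split.
  - apply Rmult_le_pos. apply Rdiv_le_0_compat; [lra|]. lra. apply pow2_ge_0.
  - assert (h / w^2 <= 9/4 * h).
    { apply Rmult_le_reg_r with (w^2); [lra|]. unfold Rdiv. rewrite Rmult_assoc, Rinv_l by lra.
      nra. }
    assert (0 <= (IZR m - b / 2 * w ^ 2) ^ 2) by apply pow2_ge_0.
    assert (0 <= h / w^2) by (apply Rdiv_le_0_compat; lra).
    nra.
Qed.

Lemma cco_bound b rho m h lam : Hyp b rho h -> forall t, Rabs (cco b rho m h lam t) <= Kc b m h lam.
Proof.
  intros HH t. pose proof HH as [Hh Hb Hd Hed]. unfold cco, Kc.
  set (s := clp rho h t).
  assert (Hs : 0 <= s <= delta rho h) by (apply clp_range; lra).
  pose proof (w_int b rho h s HH Hs). pose proof (pot_bound b rho m h s HH Hs).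
  rewrite Rabs_mult. rewrite (Rabs_right (wgt h s)) by lra.
  assert (Rabs (pot b m h s - lam) <= 3 * h * (Rabs (IZR m) + b) ^ 2 + Rabs lam).
  { eapply Rle_trans; [apply Rabs_triang|]. rewrite Rabs_Ropp, Rabs_right by lra. lra. }
  assert (0 <= Rabs (pot b m h s - lam)) by apply Rabs_pos.
  nra.
Qed.

Definition Vf (b rho : R) (m : Z) (h lam : R) := solv (aco rho h) (cco b rho m h lam).
Definition Pf (b rho : R) (m : Z) (h lam : R) := solp (aco rho h) (cco b rho m h lam).

Lemma VP_props b rho m h lam : Hyp b rho h ->
  (forall t, is_derive (Vf b rho m h lam) t (aco rho h t * Pf b rho m h lam t)) /\
  (forall t, is_derive (Pf b rho m h lam) t (cco b rho m h lam t * Vf b rho m h lam t)) /\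
  Vf b rho m h lam 0 = 1 /\ Pf b rho m h lam 0 = -1.
Proof.
  intros HH.
  apply (ode_exists _ _ (3 + Kc b m h lam)).
  - apply (aco_cont b); auto.
  - apply cco_cont; auto.
  - unfold Kc. pose proof HH as [Hh _ _ _]. assert (0 <= (Rabs (IZR m) + b)^2) by apply pow2_ge_0.
    pose proof (Rabs_pos lam). nra.
  - intros x. pose proof (aco_bound b rho h HH x). pose proof (Rabs_pos (cco b rho m h lam x)).
    pose proof (cco_bound b rho m h lam HH x). lra.
  - intros x. pose proof (aco_bound b rho h HH x). pose proof (Rabs_pos (aco rho h x)).
    pose proof (cco_bound b rho m h lam HH x). lra.
Qed.

Lemma aco_int b rho h t : Hyp b rho h -> 0 <= t <= delta rho h -> aco rho h t = / wgt h t.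
Proof. intros HH Ht. pose proof HH as [Hh Hb Hd Hed]. unfold aco.
  rewrite chi_low by lra. rewrite Rmin_left by lra. unfold Rdiv. ring. Qed.

Lemma cco_int b rho m h lam t : 0 <= t <= delta rho h ->
  cco b rho m h lam t = wgt h t * (pot b m h t - lam).
Proof. intros Ht. unfold cco. rewrite clp_id; auto. Qed.

Lemma wP_eq b rho h t (p : R) : Hyp b rho h ->
  wgt h t * (aco rho h t * p) = chi (delta rho h) t * p.
Proof.
  intros HH. pose proof HH as [Hh Hb Hd Hed]. unfold aco.
  destruct (Rle_or_lt t (2 * delta rho h)).
  - rewrite Rmin_left by lra. assert (1/3 <= wgt h t) by (apply (w_lb b rho); auto).
    field. lra.
  - rewrite chi_high by lra. unfold Rdiv. ring.
Qed.

Lemma cand_eigen b rho m h lam : Hyp b rho h -> Vf b rho m h lam (delta rho h) = 0 ->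
  is_eigenvalue b rho m h lam.
Proof.
  intros HH Hz. pose proof HH as [Hh Hb Hd Hed].
  destruct (VP_props b rho m h lam HH) as [HV [HP [HV0 HP0]]].
  set (V := Vf b rho m h lam) in *. set (P := Pf b rho m h lam) in *.
  exists V, (fun t => aco rho h t * P t),
    (fun t => dchi (delta rho h) t * P t + chi (delta rho h) t * (cco b rho m h lam t * V t)).
  split; [|split; [|split; [|split; [|split]]]].
  - intros t. apply is_derive_Reals. apply HV.
  - intros t. apply is_derive_Reals.
    apply (is_derive_ext (fun s => chi (delta rho h) s * P s)).
    { intros s. symmetry. apply (wP_eq b); auto. }
    apply isd_mult; [apply chi_deriv; auto|apply HP].
  - intros t Ht. rewrite dchi_low, chi_low by lra. rewrite cco_int by auto.
    assert (2/3 <= wgt h t) by (apply (w_int b rho); auto). field. lra.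
  - rewrite (aco_int b) by (auto; lra). rewrite HV0, HP0. unfold wgt. rewrite Rmult_0_r, Rminus_0_r. lra.
  - exact Hz.
  - exists 0. split; [lra|]. rewrite HV0. lra.
Qed.

Lemma abs_2xy a x y : Rabs (a * (2 * x * y)) <= Rabs a * (x^2 + y^2).
Proof.
  rewrite Rabs_mult. apply Rmult_le_compat_l; [apply Rabs_pos|].
  assert (0 <= (x - y)^2) by apply pow2_ge_0. assert (0 <= (x + y)^2) by apply pow2_ge_0.
  apply Rabs_le. simpl in *. split; nra.
Qed.

Lemma gronwall_fwd (E dE : R -> R) (K B T : R) : 0 < K -> 0 <= B -> 0 <= T -> E 0 = 0 ->
  (forall t, 0 <= t <= T -> is_derive E t (dE t)) ->
  (forall t, 0 <= t <= T -> dE t <= K * E t + B) ->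
  E T <= B / K * exp (K * T).
Proof.
  intros HK HB HT E0 HD Hb.
  set (F := fun t => (E t + B / K) * exp (- K * t)).
  assert (HF : F T <= F 0).
  { assert (H := mono_deriv (fun t => - F t) (fun t => - ((dE t * exp (- K * t)) + (E t + B/K) * (- K * exp (- K * t)))) 0 T).
    assert (- F 0 <= - F T); [|lra].
    apply H; [lra| |].
    - intros s Hs. apply (isd_opp F).
      apply (isd_mult (fun t => E t + B/K) (fun t => exp (-K*t)) s (dE s) (-K * exp(-K*s))).
      + replace (dE s) with (dE s + 0) by ring.
        apply (isd_plus E (fun _ => B/K)); [apply HD; auto|apply isd_const].
      + auto_derive; auto. ring.
    - intros s Hs. specialize (Hb s Hs). assert (0 < exp (- K * s)) by apply exp_pos.
      assert (dE s - K * E s - B <= 0) by lra.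
      replace (- (dE s * exp (- K * s) + (E s + B / K) * (- K * exp (- K * s))))
        with (- ((dE s - K * E s - B) * exp (- K * s))) by (field; lra).
      nra. }
  unfold F in HF. rewrite E0, Rmult_0_r, exp_0 in HF.
  assert (Hp : 0 < exp (K * T)) by apply exp_pos.
  assert (Hinv : exp (- K * T) * exp (K * T) = 1).
  { rewrite <- exp_plus. replace (- K * T + K * T) with 0 by ring. apply exp_0. }
  assert ((E T + B / K) * exp (- K * T) * exp (K * T) <= (0 + B / K) * 1 * exp (K * T)).
  { apply Rmult_le_compat_r; lra. }
  rewrite Rmult_assoc, Hinv in H.
  assert (0 <= B / K) by (apply Rdiv_le_0_compat; lra).
  assert (0 <= B / K * exp (K * T)) by (apply Rmult_le_pos; lra).
  nra.
Qed.

Lemma isd_sq (f : R -> R) x a : is_derive f x a -> is_derive (fun y => f y ^ 2) x (2 * f x * a).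
Proof. intros H. refine (is_derive_ext (fun y => f y * f y) _ x _ _ _); [intros; simpl; ring|].
  replace (2 * f x * a) with (a * f x + f x * a) by ring. apply isd_mult; auto. Qed.

Lemma derive_cont (f : R -> R) (df x : R) : is_derive f x df -> continuity_pt f x.
Proof. intros H. apply continuity_pt_filterlim. apply (@ex_derive_continuous R_AbsRing R_NormedModule).
  eexists; eauto. Qed.

Lemma sq_lt_abs x eta : 0 < eta -> x^2 < eta^2 -> Rabs x < eta.
Proof. intros He H. destruct (Rlt_or_le (Rabs x) eta); auto.
  rewrite <- pow2_abs in H. assert (0 <= Rabs x) by apply Rabs_pos. simpl in H. nra. Qed.

Lemma cco_diff b rho m h lam lam0 t : Hyp b rho h ->
  cco b rho m h lam t - cco b rho m h lam0 t = - (lam - lam0) * wgt h (clp rho h t) /\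
  2/3 <= wgt h (clp rho h t) <= 1.
Proof. intros HH. pose proof HH as [Hh Hb Hd Hed]. split. unfold cco. ring.
  apply (w_int b rho); auto. apply clp_range; lra. Qed.

Lemma cont_lam b rho m h lam0 : Hyp b rho h -> forall eta, 0 < eta ->
  exists r, 0 < r /\ forall lam, Rabs (lam - lam0) < r -> forall t, 0 <= t <= delta rho h ->
    Rabs (Vf b rho m h lam t - Vf b rho m h lam0 t) < eta.
Proof.
  intros HH eta Heta. pose proof HH as [Hh Hb Hd Hed].
  destruct (VP_props b rho m h lam0 HH) as [HV0 [HP0 [HV00 HP00]]].
  set (V0 := Vf b rho m h lam0) in *. set (P0 := Pf b rho m h lam0) in *.
  destruct (continuity_ab_maj (fun t => V0 t ^ 2) 0 (delta rho h)) as [tM [HM _]]; [lra| |].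
  { intros c _. apply derive_cont with (df := 2 * V0 c * (aco rho h c * P0 c)).
    apply isd_sq. apply HV0. }
  set (M := V0 tM ^ 2 + 1).
  assert (HM' : forall t, 0 <= t <= delta rho h -> V0 t ^ 2 <= M) by (intros t Ht; specialize (HM t Ht); unfold M; lra).
  assert (HM0 : 0 < M) by (unfold M; pose proof (pow2_ge_0 (V0 tM)); lra).
  set (K := 5 + Kc b m h lam0).
  assert (HK : 0 < K).
  { unfold K, Kc. assert (0 <= (Rabs (IZR m) + b)^2) by apply pow2_ge_0. pose proof (Rabs_pos lam0). nra. }
  set (C := M * exp (K * delta rho h) / K).
  assert (HC : 0 <= C).
  { unfold C. apply Rdiv_le_0_compat; [|lra]. apply Rmult_le_pos; [lra|left; apply exp_pos]. }
  assert (Hr : 0 < Rmin 1 (eta / (C + 1))) by (apply Rmin_pos; [lra|apply Rdiv_lt_0_compat; lra]).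
  exists (Rmin 1 (eta / (C + 1))). split; [exact Hr|].
  intros lam Hlam t Ht.
  assert (Hl1 : Rabs (lam - lam0) < 1) by (eapply Rlt_le_trans; [exact Hlam|apply Rmin_l]).
  assert (Hl2 : Rabs (lam - lam0) < eta / (C + 1)) by (eapply Rlt_le_trans; [exact Hlam|apply Rmin_r]).
  destruct (VP_props b rho m h lam HH) as [HV [HP [HV' HP']]].
  set (V := Vf b rho m h lam) in *. set (P := Pf b rho m h lam) in *.
  set (a := aco rho h) in *. set (c := cco b rho m h lam) in *. set (c0 := cco b rho m h lam0) in *.
  set (E := fun s => (V s - V0 s)^2 + (P s - P0 s)^2).
  set (dE := fun s => 2 * (V s - V0 s) * (a s * P s - a s * P0 s) + 2 * (P s - P0 s) * (c s * V s - c0 s * V0 s)).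
  set (B := (lam - lam0)^2 * M).
  assert (HB : 0 <= B) by (unfold B; apply Rmult_le_pos; [apply pow2_ge_0|lra]).
  assert (HE : E t <= B / K * exp (K * t)).
  { apply gronwall_fwd with (dE := dE); [exact HK|exact HB|lra| | |].
    - unfold E. rewrite HV', HV00, HP', HP00. ring.
    - intros s _. unfold E, dE.
      apply (isd_plus (fun s => (V s - V0 s)^2) (fun s => (P s - P0 s)^2)).
      + apply (isd_sq (fun s => V s - V0 s)). apply (isd_minus V V0); auto.
      + apply (isd_sq (fun s => P s - P0 s)). apply (isd_minus P P0); auto.
    - intros s Hs. unfold E, dE.
      assert (Hs' : 0 <= s <= delta rho h) by lra.
      destruct (cco_diff b rho m h lam lam0 s HH) as [Hq Hw].
      change (cco b rho m h lam s) with (c s) in Hq. change (cco b rho m h lam0 s) with (c0 s) in Hq.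
      set (q := - (lam - lam0) * wgt h (clp rho h s)) in Hq.
      replace (c s * V s - c0 s * V0 s) with (c s * (V s - V0 s) + (c s - c0 s) * V0 s) by ring.
      rewrite Hq.
      set (x := V s - V0 s). set (y := P s - P0 s).
      replace (2 * x * (a s * P s - a s * P0 s) + 2 * y * (c s * x + q * V0 s))
        with (a s * (2 * x * y) + c s * (2 * x * y) + 2 * y * (q * V0 s)) by (unfold x, y; ring).
      pose proof (abs_2xy (a s) x y). pose proof (abs_2xy (c s) x y).
      pose proof (aco_bound b rho h HH s) as Hab. pose proof (cco_bound b rho m h lam HH s) as Hcb.
      change (aco rho h s) with (a s) in Hab. change (cco b rho m h lam s) with (c s) in Hcb.
      assert (HKc : Kc b m h lam <= Kc b m h lam0 + 1).
      { unfold Kc. assert (Rabs lam <= Rabs lam0 + 1); [|lra].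
        replace lam with ((lam - lam0) + lam0) at 1 by ring.
        eapply Rle_trans; [apply Rabs_triang|]. lra. }
      assert (Hq2 : q^2 <= (lam - lam0)^2).
      { unfold q. replace ((- (lam - lam0) * wgt h (clp rho h s))^2) with ((lam - lam0)^2 * (wgt h (clp rho h s))^2) by ring.
        assert (0 <= (lam - lam0)^2) by apply pow2_ge_0.
        assert ((wgt h (clp rho h s))^2 <= 1) by (simpl; nra). nra. }
      assert (H3 : 2 * y * (q * V0 s) <= y^2 + q^2 * V0 s ^ 2).
      { assert (0 <= (y - q * V0 s)^2) by apply pow2_ge_0. simpl in *. nra. }
      assert (H4 : q^2 * V0 s ^ 2 <= (lam - lam0)^2 * M).
      { pose proof (HM' s Hs'). assert (0 <= q^2) by apply pow2_ge_0. assert (0 <= V0 s ^ 2) by apply pow2_ge_0. nra. }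
      assert (Hx2 : 0 <= x^2) by apply pow2_ge_0. assert (Hy2 : 0 <= y^2) by apply pow2_ge_0.
      apply Rabs_le_between in H. apply Rabs_le_between in H0.
      assert (Rabs (a s) * (x^2 + y^2) <= 3 * (x^2 + y^2)) by (apply Rmult_le_compat_r; lra).
      assert (Rabs (c s) * (x^2 + y^2) <= (Kc b m h lam0 + 1) * (x^2 + y^2)) by (apply Rmult_le_compat_r; lra).
      unfold K, B. lra. }
  assert (HE2 : E t <= (lam - lam0)^2 * C).
  { eapply Rle_trans; [exact HE|]. unfold B, C.
    assert (exp (K * t) <= exp (K * delta rho h)).
    { destruct (Req_dec t (delta rho h)) as [->|]; [lra|]. left. apply exp_increasing. apply Rmult_lt_compat_l; lra. }
    assert (0 <= (lam - lam0)^2 * M / K) by (apply Rdiv_le_0_compat; [apply Rmult_le_pos; [apply pow2_ge_0|lra]|lra]).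
    replace ((lam - lam0) ^ 2 * M / K * exp (K * t)) with (((lam - lam0) ^ 2 * M / K) * exp (K * t)) by ring.
    replace ((lam - lam0) ^ 2 * (M * exp (K * delta rho h) / K)) with (((lam - lam0) ^ 2 * M / K) * exp (K * delta rho h)) by (field; lra).
    apply Rmult_le_compat_l; auto. }
  apply sq_lt_abs; auto.
  assert (Hy : 0 <= (P t - P0 t)^2) by apply pow2_ge_0.
  assert (Hsq : (lam - lam0)^2 * C < eta^2).
  { rewrite <- pow2_abs. set (z := Rabs (lam - lam0)) in *. assert (0 <= z) by apply Rabs_pos.
    assert (Hz : z * (C + 1) < eta).
    { apply Rmult_lt_reg_r with (/ (C+1)). apply Rinv_0_lt_compat; lra.
      rewrite Rmult_assoc, Rinv_r by lra. unfold Rdiv in Hl2. lra. }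
    assert (H1 : z^2 * C <= (z * (C+1))^2).
    { assert (0 <= z^2) by apply pow2_ge_0. replace ((z * (C+1))^2) with (z^2 * (C+1)^2) by ring.
      apply Rmult_le_compat_l; auto. simpl. nra. }
    assert (0 <= z * (C + 1)) by (apply Rmult_le_pos; lra).
    assert (H2 : (z * (C+1))^2 < eta^2) by (simpl; nra).
    lra. }
  unfold E in HE2. lra.
Qed.

Lemma uniq0 b rho m h lam z : Hyp b rho h -> 0 <= z <= delta rho h ->
  Vf b rho m h lam z = 0 -> Pf b rho m h lam z = 0 -> False.
Proof.
  intros HH Hz HVz HPz. pose proof HH as [Hh Hb Hd Hed].
  destruct (VP_props b rho m h lam HH) as [HV [HP [HV0 HP0]]].
  set (V := Vf b rho m h lam) in *. set (P := Pf b rho m h lam) in *.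
  set (a := aco rho h) in *. set (c := cco b rho m h lam) in *.
  set (K := 3 + Kc b m h lam).
  assert (HK : 0 < K).
  { unfold K, Kc. assert (0 <= (Rabs (IZR m) + b)^2) by apply pow2_ge_0. pose proof (Rabs_pos lam). nra. }
  set (G := fun s => (V s ^ 2 + P s ^ 2) * exp (K * s)).
  assert (HG : G 0 <= G z).
  { apply (mono_deriv G (fun s => (2 * V s * (a s * P s) + 2 * P s * (c s * V s)) * exp (K * s)
                        + (V s ^ 2 + P s ^ 2) * (K * exp (K * s)))); [lra| |].
    - intros s _. unfold G.
      apply (isd_mult (fun s => V s ^ 2 + P s ^ 2) (fun s => exp (K * s))).
      + apply (isd_plus (fun s => V s ^ 2) (fun s => P s ^ 2)); apply isd_sq; auto.
      + auto_derive; auto. ring.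
    - intros s _. assert (0 < exp (K * s)) by apply exp_pos.
      pose proof (abs_2xy (a s) (V s) (P s)). pose proof (abs_2xy (c s) (V s) (P s)).
      pose proof (aco_bound b rho h HH s) as Hab. pose proof (cco_bound b rho m h lam HH s) as Hcb.
      change (aco rho h s) with (a s) in Hab. change (cco b rho m h lam s) with (c s) in Hcb.
      apply Rabs_le_between in H0. apply Rabs_le_between in H1.
      assert (0 <= V s ^ 2 + P s ^ 2) by (pose proof (pow2_ge_0 (V s)); pose proof (pow2_ge_0 (P s)); lra).
      assert (Rabs (a s) * (V s ^ 2 + P s ^ 2) <= 3 * (V s ^ 2 + P s ^ 2)) by (apply Rmult_le_compat_r; lra).
      assert (Rabs (c s) * (V s ^ 2 + P s ^ 2) <= Kc b m h lam * (V s ^ 2 + P s ^ 2)) by (apply Rmult_le_compat_r; lra).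
      replace ((2 * V s * (a s * P s) + 2 * P s * (c s * V s)) * exp (K * s) + (V s ^ 2 + P s ^ 2) * (K * exp (K * s)))
        with ((a s * (2 * V s * P s) + c s * (2 * V s * P s) + K * (V s ^ 2 + P s ^ 2)) * exp (K * s)) by ring.
      apply Rmult_le_pos; [|lra]. unfold K. lra. }
  unfold G in HG. rewrite HVz, HPz, HV0, HP0 in HG. rewrite Rmult_0_r, exp_0 in HG.
  simpl in HG. lra.
Qed.

Lemma cont_eps (f : R -> R) z eps : continuity_pt f z -> 0 < eps ->
  exists a, 0 < a /\ forall t, Rabs (t - z) < a -> Rabs (f t - f z) < eps.
Proof.
  intros H He. destruct (H eps He) as [a [Ha Hb]]. exists a. split; auto.
  intros t Ht. destruct (Req_dec t z) as [->|Hne].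
  - unfold Rminus. rewrite Rplus_opp_r, Rabs_R0. auto.
  - apply Hb. split. split; [exact I|auto]. exact Ht.
Qed.

Lemma first_zero (f : R -> R) x y : x <= y -> (forall t, x <= t <= y -> continuity_pt f t) ->
  0 < f x -> f y <= 0 ->
  exists z, x < z <= y /\ f z = 0 /\ forall s, x <= s < z -> 0 < f s.
Proof.
  intros Hxy Hc Hfx Hfy.
  set (S := fun t => x <= t <= y /\ forall s, x <= s <= t -> 0 < f s).
  assert (HSb : bound S) by (exists y; intros t [Ht _]; lra).
  assert (HSx : exists t, S t) by (exists x; split; [lra|intros s Hs; replace s with x by lra; auto]).
  destruct (completeness S HSb HSx) as [z [Hub Hlub]].
  assert (Hxz : x <= z) by (apply Hub; destruct HSx as [t Ht]; unfold S; split; [lra|]; intros s Hs; replace s with x by lra; auto).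
  assert (Hzy : z <= y) by (apply Hlub; intros t [Ht _]; lra).
  assert (Hpos : forall s, x <= s < z -> 0 < f s).
  { intros s Hs. destruct (classic (exists t, S t /\ s < t)) as [[t [[Ht1 Ht2] Hst]]|Hn].
    - apply Ht2. lra.
    - exfalso. assert (z <= s); [|lra]. apply Hlub. intros t Ht.
      destruct (Rle_or_lt t s); auto. exfalso. apply Hn. exists t. auto. }
  assert (Hfz : f z = 0).
  { destruct (Rtotal_order (f z) 0) as [Hl|[He|Hg]]; auto; exfalso.
    - destruct (cont_eps f z (- f z) (Hc z (conj Hxz Hzy))) as [a [Ha Hb]]; [lra|].
      destruct (Req_dec z x) as [->|Hne]; [lra|].
      set (s := Rmax x (z - a/2)).
      assert (Hs1 : x <= s) by apply Rmax_l.
      assert (Hs2 : s < z) by (unfold s; apply Rmax_lub_lt; lra).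
      assert (Hs3 : Rabs (s - z) < a).
      { rewrite Rabs_left by lra. pose proof (Rmax_r x (z - a/2)). fold s in H. lra. }
      specialize (Hb s Hs3). specialize (Hpos s (conj Hs1 Hs2)).
      apply Rabs_lt_between in Hb. lra.
    - destruct (Req_dec z y) as [->|Hne]; [lra|].
      destruct (cont_eps f z (f z) (Hc z (conj Hxz Hzy))) as [a [Ha Hb]]; [lra|].
      set (s := Rmin y (z + a/2)).
      assert (Hs2 : z < s) by (unfold s; apply Rmin_glb_lt; lra).
      assert (S s).
      { split. split; [lra|apply Rmin_l]. intros r Hr.
        destruct (Rlt_or_le r z). apply Hpos; lra.
        assert (Rabs (r - z) < a).
        { rewrite Rabs_right by lra. pose proof (Rmin_r y (z + a/2)). fold s in H0. lra. }
        specialize (Hb r H0). apply Rabs_lt_between in Hb. lra. }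
      specialize (Hub s H). lra. }
  exists z. split; [|split; auto].
  split; auto. destruct (Req_dec x z) as [<-|]; [lra|lra].
Qed.

Lemma last_zero (f : R -> R) x y : x <= y -> (forall t, x <= t <= y -> continuity_pt f t) ->
  f x <= 0 -> 0 < f y ->
  exists z, x <= z < y /\ f z = 0 /\ forall s, z < s <= y -> 0 < f s.
Proof.
  intros Hxy Hc Hfx Hfy.
  assert (Hc' : forall t, - y <= t <= - x -> continuity_pt (fun t => f (- t)) t).
  { intros t Ht. apply (continuity_pt_comp (fun t => - t) f).
    apply continuity_pt_opp, derivable_continuous_pt, derivable_pt_id.
    apply Hc. lra. }
  assert (H1 : 0 < f (- - y)) by (rewrite Ropp_involutive; auto).
  assert (H2 : f (- - x) <= 0) by (rewrite Ropp_involutive; auto).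
  destruct (first_zero (fun t => f (- t)) (- y) (- x) ltac:(lra) Hc' H1 H2) as [z [Hz1 [Hz2 Hz3]]].
  exists (- z). split; [lra|split; auto]. intros s Hs. rewrite <- (Ropp_involutive s).
  apply Hz3. lra.
Qed.

Lemma deriv_nonneg_right (u : R -> R) a l r : is_derive u a l -> u a = 0 -> 0 < r ->
  (forall s, a < s < a + r -> 0 < u s) -> 0 <= l.
Proof.
  intros Hd Ha Hr Hp. apply is_derive_Reals in Hd.
  destruct (Rle_or_lt 0 l) as [|Hl]; auto. exfalso.
  destruct (Hd (- l / 2)) as [dl Hdl]; [lra|].
  set (hh := Rmin (dl / 2) (r / 2)).
  assert (Hh : 0 < hh) by (apply Rmin_pos; [pose proof (cond_pos dl)|]; lra).
  assert (Hh2 : hh < dl) by (pose proof (cond_pos dl); pose proof (Rmin_l (dl/2) (r/2)) as Hm; fold hh in Hm; lra).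
  assert (Hh3 : hh < r) by (pose proof (Rmin_r (dl/2) (r/2)) as Hm; fold hh in Hm; lra).
  specialize (Hdl hh (Rgt_not_eq _ _ Hh)). rewrite Rabs_right in Hdl by lra. specialize (Hdl Hh2).
  rewrite Ha in Hdl. apply Rabs_lt_between in Hdl.
  assert (Hu : 0 < u (a + hh)) by (apply Hp; lra).
  assert (0 < (u (a + hh) - 0) / hh) by (apply Rdiv_lt_0_compat; lra). lra.
Qed.

Lemma deriv_nonpos_left (u : R -> R) z l r : is_derive u z l -> u z = 0 -> 0 < r ->
  (forall s, z - r < s < z -> 0 < u s) -> l <= 0.
Proof.
  intros Hd Ha Hr Hp. apply is_derive_Reals in Hd.
  destruct (Rle_or_lt l 0) as [|Hl]; auto. exfalso.
  destruct (Hd (l / 2)) as [dl Hdl]; [lra|].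
  set (hh := Rmin (dl / 2) (r / 2)).
  assert (Hh : 0 < hh) by (apply Rmin_pos; [pose proof (cond_pos dl)|]; lra).
  assert (Hh2 : hh < dl) by (pose proof (cond_pos dl); pose proof (Rmin_l (dl/2) (r/2)) as Hm; fold hh in Hm; lra).
  assert (Hh3 : hh < r) by (pose proof (Rmin_r (dl/2) (r/2)) as Hm; fold hh in Hm; lra).
  specialize (Hdl (- hh)). rewrite Rabs_Ropp, Rabs_right in Hdl by lra.
  specialize (Hdl (Rlt_not_eq _ _ (Ropp_lt_gt_0_contravar _ Hh)) Hh2).
  rewrite Ha in Hdl. apply Rabs_lt_between in Hdl.
  assert (Hu : 0 < u (z + - hh)) by (apply Hp; lra).
  assert (Hq : (u (z + - hh) - 0) / - hh = - (u (z + - hh) / hh)) by (field; lra).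
  assert (0 < u (z + - hh) / hh) by (apply Rdiv_lt_0_compat; lra).
  lra.
Qed.

Lemma deriv_neg_point (u : R -> R) z l r : is_derive u z l -> u z = 0 -> l < 0 -> 0 < r ->
  exists t, z < t < z + r /\ u t < 0.
Proof.
  intros Hd Ha Hl Hr. apply is_derive_Reals in Hd.
  destruct (Hd (- l / 2)) as [dl Hdl]; [lra|].
  set (hh := Rmin (dl / 2) (r / 2)).
  assert (Hh : 0 < hh) by (apply Rmin_pos; [pose proof (cond_pos dl)|]; lra).
  assert (Hh2 : hh < dl) by (pose proof (cond_pos dl); pose proof (Rmin_l (dl/2) (r/2)) as Hm; fold hh in Hm; lra).
  assert (Hh3 : hh < r) by (pose proof (Rmin_r (dl/2) (r/2)) as Hm; fold hh in Hm; lra).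
  specialize (Hdl hh (Rgt_not_eq _ _ Hh)). rewrite Rabs_right in Hdl by lra. specialize (Hdl Hh2).
  rewrite Ha in Hdl. apply Rabs_lt_between in Hdl.
  exists (z + hh). split; [lra|].
  destruct (Rlt_or_le (u (z + hh)) 0); auto. exfalso.
  assert (0 <= (u (z + hh) - 0) / hh) by (apply Rdiv_le_0_compat; lra). lra.
Qed.

Lemma wronsk (w u du gu f df Pf gf : R -> R) a z : a < z ->
  (forall t, is_derive u t (du t)) -> (forall t, is_derive (fun s => w s * du s) t (gu t)) ->
  (forall t, is_derive f t (df t)) -> (forall t, is_derive Pf t (gf t)) ->
  (forall t, a <= t <= z -> Pf t = w t * df t) ->
  (forall t, a < t < z -> 0 < f t * gu t - u t * gf t) ->
  0 <= f a * (w a * du a) - u a * Pf a -> f z * (w z * du z) - u z * Pf z <= 0 -> False.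
Proof.
  intros Haz Hu Hgu Hf Hgf HPf Hpos Ha Hz.
  set (W := fun t => f t * (w t * du t) - u t * Pf t).
  set (dW := fun t => df t * (w t * du t) + f t * gu t - (du t * Pf t + u t * gf t)).
  destruct (MVT_cor2 W dW a z Haz) as [c [Hc1 Hc2]].
  - intros c Hc. apply is_derive_Reals. unfold W, dW.
    apply (isd_minus (fun t => f t * (w t * du t)) (fun t => u t * Pf t)).
    + apply (isd_mult f (fun t => w t * du t)); auto.
    + apply (isd_mult u Pf); auto.
  - assert (HdW : dW c = f c * gu c - u c * gf c).
    { unfold dW. rewrite HPf by lra. ring. }
    rewrite HdW in Hc1. specialize (Hpos c Hc2).
    unfold W in Hc1. assert (0 < (f c * gu c - u c * gf c) * (z - a)) by (apply Rmult_lt_0_compat; lra).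
    lra.
Qed.

Lemma cont_of_deriv (u du : R -> R) : (forall t, is_derive u t (du t)) -> forall t, continuity_pt u t.
Proof. intros H t. apply continuity_pt_filterlim. apply (@ex_derive_continuous R_AbsRing R_NormedModule).
  eexists; eauto. Qed.

Lemma nodal_pos (w pot : R -> R) (mu z0 : R) (u du gu f df Pf gf : R -> R) :
  (forall t, 0 <= t <= z0 -> 0 < w t) -> w 0 = 1 ->
  (forall t, is_derive u t (du t)) -> (forall t, is_derive (fun s => w s * du s) t (gu t)) ->
  (forall t, 0 <= t <= z0 -> gu t = w t * (pot t - mu) * u t) ->
  du 0 = - u 0 -> u z0 = 0 -> forall t1, 0 <= t1 <= z0 -> 0 < u t1 ->
  (forall t, is_derive f t (df t)) -> (forall t, is_derive Pf t (gf t)) ->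
  (forall t, 0 <= t <= z0 -> Pf t = w t * df t) ->
  (forall t, 0 <= t <= z0 -> 0 < f t) -> df 0 <= - f 0 ->
  (forall t, 0 <= t <= z0 -> gf t < w t * (pot t - mu) * f t) -> False.
Proof.
  intros Hw Hw0 Hu Hgu Heq Hrob Hz0 t1 Ht1 Hut1 Hf Hgf HPf Hfp Hrobf Hsup.
  assert (Hc := cont_of_deriv u du Hu).
  assert (Ht1z : t1 < z0) by (destruct (Req_dec t1 z0) as [->|]; lra).
  destruct (first_zero u t1 z0) as [z [Hz1 [Hz2 Hz3]]]; [lra|intros; apply Hc|auto|lra|].
  assert (Hcore : forall a, 0 <= a < t1 -> (forall s, a < s <= t1 -> 0 < u s) ->
             0 <= f a * (w a * du a) - u a * Pf a -> False).
  { intros a Ha Hpa HWa.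
    apply (wronsk w u du gu f df Pf gf a z); auto; [lra| | |].
    - intros t Ht. apply HPf. lra.
    - intros t Ht. assert (Hut : 0 < u t) by (destruct (Rle_or_lt t t1); [apply Hpa|apply Hz3]; lra).
      rewrite Heq by lra. specialize (Hsup t ltac:(lra)). specialize (Hfp t ltac:(lra)).
      replace (f t * (w t * (pot t - mu) * u t) - u t * gf t) with (u t * (w t * (pot t - mu) * f t - gf t)) by ring.
      apply Rmult_lt_0_compat; lra.
    - rewrite Hz2, Rmult_0_l, Rminus_0_r.
      assert (du z <= 0).
      { apply (deriv_nonpos_left u z (du z) (z - a)); auto; [lra|].
        intros s Hs. destruct (Rle_or_lt s t1); [apply Hpa|apply Hz3]; lra. }
      assert (0 < f z) by (apply Hfp; lra). assert (0 < w z) by (apply Hw; lra).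
      assert (0 <= f z * w z) by (apply Rmult_le_pos; lra). nra. }
  destruct (classic (exists s, 0 <= s <= t1 /\ u s <= 0)) as [[s [Hs Hus]]|Hn].
  - destruct (last_zero u s t1) as [a [Ha1 [Ha2 Ha3]]]; [lra|intros; apply Hc|auto|auto|].
    apply (Hcore a); [lra|auto|].
    rewrite Ha2, Rmult_0_l, Rminus_0_r.
    assert (0 <= du a).
    { apply (deriv_nonneg_right u a (du a) (t1 - a)); auto; [lra|]. intros r Hr. apply Ha3. lra. }
    assert (0 < f a) by (apply Hfp; lra). assert (0 < w a) by (apply Hw; lra).
    apply Rmult_le_pos; [lra|apply Rmult_le_pos; lra].
  - assert (Hp0 : forall s, 0 <= s <= t1 -> 0 < u s).
    { intros s Hs. destruct (Rlt_or_le 0 (u s)); auto. exfalso. apply Hn. exists s. auto. }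
    destruct (Req_dec t1 0) as [Ht10|Ht10].
    +
      subst t1.
      apply (wronsk w u du gu f df Pf gf 0 z); auto; [lra| | | |].
      * intros t Ht. apply HPf. lra.
      * intros t Ht. assert (Hut : 0 < u t) by (apply Hz3; lra).
        rewrite Heq by lra. specialize (Hsup t ltac:(lra)). specialize (Hfp t ltac:(lra)).
        replace (f t * (w t * (pot t - mu) * u t) - u t * gf t) with (u t * (w t * (pot t - mu) * f t - gf t)) by ring.
        apply Rmult_lt_0_compat; lra.
      * rewrite Hw0, Hrob, HPf, Hw0 by lra.
        assert (0 < u 0) by auto. assert (0 < f 0) by (apply Hfp; lra).
        replace (f 0 * (1 * - u 0) - u 0 * (1 * df 0)) with (- u 0 * (f 0 + df 0)) by ring.
        assert (f 0 + df 0 <= 0) by lra. nra.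
      * rewrite Hz2, Rmult_0_l, Rminus_0_r.
        assert (du z <= 0).
        { apply (deriv_nonpos_left u z (du z) z); auto; [lra|].
          intros s Hs. apply Hz3; lra. }
        assert (0 < f z) by (apply Hfp; lra). assert (0 < w z) by (apply Hw; lra).
        assert (0 <= f z * w z) by (apply Rmult_le_pos; lra). nra.
    + apply (Hcore 0); [lra|intros; apply Hp0; lra|].
      rewrite Hw0, Hrob, HPf, Hw0 by lra.
      assert (0 < u 0) by (apply Hp0; lra). assert (0 < f 0) by (apply Hfp; lra).
      replace (f 0 * (1 * - u 0) - u 0 * (1 * df 0)) with (- u 0 * (f 0 + df 0)) by ring.
      assert (f 0 + df 0 <= 0) by lra. nra.
Qed.

Lemma nodal (w pot : R -> R) (mu z0 : R) (u du gu f df Pf gf : R -> R) :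
  (forall t, 0 <= t <= z0 -> 0 < w t) -> w 0 = 1 ->
  (forall t, is_derive u t (du t)) -> (forall t, is_derive (fun s => w s * du s) t (gu t)) ->
  (forall t, 0 <= t <= z0 -> gu t = w t * (pot t - mu) * u t) ->
  du 0 = - u 0 -> u z0 = 0 -> (exists t1, 0 <= t1 <= z0 /\ u t1 <> 0) ->
  (forall t, is_derive f t (df t)) -> (forall t, is_derive Pf t (gf t)) ->
  (forall t, 0 <= t <= z0 -> Pf t = w t * df t) ->
  (forall t, 0 <= t <= z0 -> 0 < f t) -> df 0 <= - f 0 ->
  (forall t, 0 <= t <= z0 -> gf t < w t * (pot t - mu) * f t) -> False.
Proof.
  intros Hw Hw0 Hu Hgu Heq Hrob Hz0 [t1 [Ht1 Hut1]] Hf Hgf HPf Hfp Hrobf Hsup.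
  destruct (Rlt_or_le 0 (u t1)) as [Hp|Hn].
  - apply (nodal_pos w pot mu z0 u du gu f df Pf gf Hw Hw0 Hu Hgu Heq Hrob Hz0 t1 Ht1 Hp Hf Hgf HPf Hfp Hrobf Hsup).
  - refine (nodal_pos w pot mu z0 (fun t => - u t) (fun t => - du t) (fun t => - gu t) f df Pf gf Hw Hw0
      _ _ _ _ _ t1 Ht1 _ Hf Hgf HPf Hfp Hrobf Hsup).
    + intros t. apply (isd_opp u). auto.
    + intros t. refine (is_derive_ext (fun s => - (w s * du s)) _ t _ _ _); [intros; simpl; ring|].
      apply (isd_opp (fun s => w s * du s)). auto.
    + intros t Ht. rewrite Heq by auto. ring.
    + rewrite Hrob. auto.
    + rewrite Hz0. ring.
    + lra.
Qed.

Ltac nra' := repeat match goal with H := _ |- _ => clearbody H end; nra.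

Lemma sqrt_sq h : 0 < h -> sqrt h * sqrt h = h.
Proof. intros; apply sqrt_sqrt; lra. Qed.

Lemma absY A b m : 0 < b -> Rabs (IZR m) <= A -> Rabs (IZR m - b/2) <= A + b/2.
Proof. intros Hb Hm. eapply Rle_trans; [apply Rabs_triang|]. rewrite Rabs_Ropp, (Rabs_right (b/2)) by lra. lra. Qed.

Lemma wpot_expr b m h t : 0 < wgt h t -> wgt h t * pot b m h t = h * (IZR m - b/2 * wgt h t ^ 2)^2 / wgt h t.
Proof. intros Hw. unfold pot. field. lra. Qed.

Lemma wpot_lower A b rho m h t : Hyp b rho h -> Rabs (IZR m) <= A -> 0 <= t <= delta rho h ->
  h * ((IZR m - b/2)^2 - (2*A+b) * b * (sqrt h * delta rho h)) <= wgt h t * pot b m h t.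
Proof.
  intros HH Hm Ht. pose proof HH as [Hh Hb Hd Hed].
  pose proof (w_int b rho h t HH Ht) as Hw.
  rewrite wpot_expr by lra.
  set (w := wgt h t) in *. set (Y := IZR m - b/2). set (ed := sqrt h * delta rho h) in *.
  assert (He : 0 < sqrt h) by (apply sqrt_lt_R0; lra).
  assert (Het : sqrt h * t <= ed) by (unfold ed; apply Rmult_le_compat_l; lra).
  assert (Hw1 : w = 1 - sqrt h * t) by reflexivity.
  set (c := b/2 * (1 - w^2)).
  assert (Hc0 : 0 <= c) by (unfold c; apply Rmult_le_pos; [lra|simpl; nra']).
  assert (Hc1 : c <= b * ed).
  { assert (H1w : 1 - w^2 <= 2 * ed).
    { rewrite Hw1. assert (0 <= (sqrt h * t)^2) by apply pow2_ge_0. simpl in *. lra. }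
    unfold c. replace (b * ed) with (b/2 * (2 * ed)) by field.
    apply Rmult_le_compat_l; lra. }
  assert (HX : IZR m - b/2 * w^2 = Y + c) by (unfold Y, c; ring).
  rewrite HX.
  assert (HY : Rabs Y <= A + b/2) by (apply absY; auto).
  assert (H2 : (Y + c)^2 >= Y^2 - (2*A+b) * b * ed).
  { assert (2 * Y * c >= - (2 * (A + b/2)) * (b * ed)).
    { assert (Y * c >= - (Rabs Y * c)).
      { destruct (Rle_or_lt 0 Y). rewrite Rabs_right by lra. nra'. rewrite Rabs_left by lra. nra'. }
      assert (Rabs Y * c <= (A + b/2) * (b * ed)) by (apply Rmult_le_compat; auto; apply Rabs_pos).
      lra. }
    assert (0 <= c^2) by apply pow2_ge_0.
    simpl in *. nra'. }
  apply Rle_trans with (h * (Y + c)^2).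
  { apply Rmult_le_compat_l; lra. }
  unfold Rdiv. rewrite Rmult_assoc.
  apply Rmult_le_compat_l; [lra|].
  assert (0 <= (Y + c)^2) by apply pow2_ge_0.
  assert (1 <= / w).
  { apply Rmult_le_reg_r with w; [lra|]. rewrite Rinv_l by lra. lra. }
  nra'.
Qed.

Lemma wpot_upper A b rho m h t : Hyp b rho h -> Rabs (IZR m) <= A -> 0 <= t <= delta rho h ->
  wgt h t * pot b m h t <= h * ((IZR m - b/2)^2 + 2 * (A + 2*b)^2 * (sqrt h * delta rho h)).
Proof.
  intros HH Hm Ht. pose proof HH as [Hh Hb Hd Hed].
  pose proof (w_int b rho h t HH Ht) as Hw.
  rewrite wpot_expr by lra.
  set (w := wgt h t) in *. set (Y := IZR m - b/2). set (ed := sqrt h * delta rho h) in *.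
  assert (He : 0 < sqrt h) by (apply sqrt_lt_R0; lra).
  assert (Het : sqrt h * t <= ed) by (unfold ed; apply Rmult_le_compat_l; lra).
  assert (Het0 : 0 <= sqrt h * t) by (apply Rmult_le_pos; lra).
  assert (Hw1 : w = 1 - sqrt h * t) by reflexivity.
  set (c := b/2 * (1 - w^2)).
  assert (Hc0 : 0 <= c) by (unfold c; apply Rmult_le_pos; [lra|simpl; nra']).
  assert (Hc1 : c <= b * ed).
  { assert (H1w : 1 - w^2 <= 2 * ed).
    { rewrite Hw1. assert (0 <= (sqrt h * t)^2) by apply pow2_ge_0. simpl in *. lra. }
    unfold c. replace (b * ed) with (b/2 * (2 * ed)) by field.
    apply Rmult_le_compat_l; lra. }
  assert (HX : IZR m - b/2 * w^2 = Y + c) by (unfold Y, c; ring).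
  rewrite HX.
  assert (HY : Rabs Y <= A + b/2) by (apply absY; auto).
  assert (HY2 : Y^2 <= (A + b/2)^2) by (rewrite <- pow2_abs; apply pow_incr; split; [apply Rabs_pos|auto]).
  assert (Hed0 : 0 <= ed) by (unfold ed; apply Rmult_le_pos; lra).
  assert (H2 : (Y + c)^2 <= Y^2 + ed * (2 * (A + b/2) * b + b^2 / 3)).
  { assert (Y * c <= (A + b/2) * (b * ed)).
    { assert (Y * c <= Rabs Y * c) by (apply Rmult_le_compat_r; [auto|apply Rle_abs]).
      assert (Rabs Y * c <= (A + b/2) * (b * ed)) by (apply Rmult_le_compat; auto; apply Rabs_pos).
      lra. }
    assert (c^2 <= (b * ed)^2) by (apply pow_incr; lra).
    assert ((b * ed)^2 <= ed * (b^2/3)).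
    { replace ((b*ed)^2) with ((b^2 * ed) * ed) by ring. replace (ed*(b^2/3)) with ((b^2*ed)*(1/3)) by field.
      apply Rmult_le_compat_l; [|lra]. apply Rmult_le_pos; [apply pow2_ge_0|lra]. }
    replace ((Y + c)^2) with (Y^2 + 2*(Y*c) + c^2) by ring. lra. }
  assert (Hiw : / w <= 1 + 3/2 * ed).
  { apply Rmult_le_reg_r with w; [lra|]. rewrite Rinv_l by lra. rewrite Hw1.
    assert ((sqrt h * t) * (1 + 3/2*ed) <= ed * (3/2)) by (apply Rmult_le_compat; lra). lra. }
  assert (Hiw0 : 0 < / w) by (apply Rinv_0_lt_compat; lra).
  unfold Rdiv. rewrite Rmult_assoc. apply Rmult_le_compat_l; [lra|].
  assert (0 <= (Y + c)^2) by apply pow2_ge_0.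
  apply Rle_trans with ((Y^2 + ed * (2 * (A + b/2) * b + b^2 / 3)) * (1 + 3/2 * ed)).
  { apply Rmult_le_compat; auto; lra. }
  assert (0 <= Y^2) by apply pow2_ge_0.
  assert (0 <= ed * (2 * (A + b/2) * b + b^2 / 3)) by (apply Rmult_le_pos; [lra|]; assert (0 <= A) by (pose proof (Rabs_pos (IZR m)); lra); nra').
  assert (0 <= A) by (pose proof (Rabs_pos (IZR m)); lra).
  assert (ed <= 1/3) by lra.
  simpl. nra'.
Qed.

Lemma id_low (e t P beta sigma e1 h w s : R) : h = e*e -> w = 1 - e*t -> s = 1 - h*t/2 ->
  w*P + w*(1 + e - (beta - 1/2 - sigma)*h) - (e*s + w*h/2 + w*s^2) = (w*P - h*beta + h*e1) + h*(beta*e*t - e1 + w*sigma - e*t^2 - w*h*t^2/4 + e*t/2).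
Proof. intros -> -> ->. field. Qed.
Lemma id_up (e t P Y2 sigma kap h w s2 : R) : h = e*e -> w = 1 - e*t -> s2 = 1 - kap - h*t/2 ->
  w*P + w*(1 + e - (Y2 - 1/2 + sigma/2)*h) - (e*s2 + w*h/2 + w*s2^2) = (w*P - h*Y2) + h*(Y2*e*t - w*sigma/2 - e*t^2 - w*h*t^2/4 + e*t/2) + e*kap + 2*w*kap*(1 - h*t/2) - w*kap^2.
Proof. intros -> -> ->. field. Qed.

Lemma ineq_low A b rho m h beta sigma t : Hyp b rho h -> Rabs (IZR m) <= A ->
  0 <= beta <= (IZR m - b/2)^2 -> 0 <= t <= delta rho h -> 0 < sigma ->
  sqrt h * delta rho h ^ 2 + h * delta rho h ^ 2 / 4 + (2*A+b) * b * (sqrt h * delta rho h) <= 2/3 * sigma ->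
  sqrt h * (1 - h*t/2) + wgt h t * h/2 + wgt h t * (1 - h*t/2)^2
    <= wgt h t * (pot b m h t - (-1 - sqrt h + (beta - 1/2 - sigma) * h)).
Proof.
  intros HH Hm Hbeta Ht Hs Hsmall.
  pose proof (wpot_lower A b rho m h t HH Hm Ht) as HL.
  pose proof (w_int b rho h t HH Ht) as Hw.
  pose proof HH as [Hh Hb Hd Hed].
  assert (He : 0 < sqrt h) by (apply sqrt_lt_R0; lra).
  assert (Hhe : h = sqrt h * sqrt h) by (symmetry; apply sqrt_sq; lra).
  assert (Hw1 : wgt h t = 1 - sqrt h * t) by reflexivity.
  set (e1 := (2*A+b) * b * (sqrt h * delta rho h)) in *.
  pose proof (id_low (sqrt h) t (pot b m h t) beta sigma e1 h (wgt h t) (1 - h*t/2) Hhe Hw1 eq_refl) as Hid.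
  set (P := pot b m h t) in *. set (w := wgt h t) in *. set (e := sqrt h) in *. set (d := delta rho h) in *.
  clearbody e1 P w e d.
  assert (h*beta <= h*(IZR m - b/2)^2) by (apply Rmult_le_compat_l; lra).
  assert (H1 : 0 <= w*P - h*beta + h*e1) by lra.
  assert (H2 : 0 <= beta*e*t - e1 + w*sigma - e*t^2 - w*h*t^2/4 + e*t/2).
  { assert (0 <= beta*e*t) by (apply Rmult_le_pos; [apply Rmult_le_pos|]; lra).
    assert (e*t^2 <= e*d^2) by (apply Rmult_le_compat_l; [lra|apply pow_incr; lra]).
    assert (w*h*t^2/4 <= h*d^2/4).
    { assert (t^2 <= d^2) by (apply pow_incr; lra). assert (0 <= t^2) by apply pow2_ge_0.
      assert (0 <= h * t^2) by (apply Rmult_le_pos; lra).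
      assert (w * (h*t^2) <= 1 * (h*t^2)) by (apply Rmult_le_compat_r; lra).
      assert (h*t^2 <= h*d^2) by (apply Rmult_le_compat_l; lra).
      replace (w*h*t^2/4) with (w*(h*t^2)/4) by field. lra. }
    assert (2/3*sigma <= w*sigma) by (apply Rmult_le_compat_r; lra).
    assert (0 <= e*t/2) by (assert (0 <= e*t) by (apply Rmult_le_pos; lra); lra).
    lra. }
  assert (0 <= h * (beta*e*t - e1 + w*sigma - e*t^2 - w*h*t^2/4 + e*t/2)) by (apply Rmult_le_pos; lra).
  lra.
Qed.

Lemma ineq_up A b rho m h sigma kap t : Hyp b rho h -> Rabs (IZR m) <= A -> h <= 1 ->
  0 <= t <= delta rho h -> 0 < sigma -> 0 <= kap ->
  sqrt h * delta rho h * (3 * (A + 2*b)^2 + 1) + 3 * kap / h <= sigma / 3 ->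
  wgt h t * (pot b m h t - (-1 - sqrt h + ((IZR m - b/2)^2 - 1/2 + sigma/2) * h))
    <= sqrt h * (1 - kap - h*t/2) + wgt h t * h/2 + wgt h t * (1 - kap - h*t/2)^2.
Proof.
  intros HH Hm Hh1 Ht Hs Hk Hsmall.
  pose proof (wpot_upper A b rho m h t HH Hm Ht) as HU.
  pose proof (w_int b rho h t HH Ht) as Hw.
  pose proof HH as [Hh Hb Hd Hed].
  assert (He : 0 < sqrt h) by (apply sqrt_lt_R0; lra).
  assert (He1 : sqrt h <= 1) by (rewrite <- sqrt_1; apply sqrt_le_1_alt; lra).
  assert (Hhe : h = sqrt h * sqrt h) by (symmetry; apply sqrt_sq; lra).
  assert (Hw1 : wgt h t = 1 - sqrt h * t) by reflexivity.
  assert (HY : Rabs (IZR m - b/2) <= A + b/2) by (apply absY; auto).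
  assert (HY2 : (IZR m - b/2)^2 <= (A + b/2)^2) by (rewrite <- pow2_abs; apply pow_incr; split; [apply Rabs_pos|auto]).
  assert (HA : 0 <= A) by (pose proof (Rabs_pos (IZR m)); lra).
  pose proof (id_up (sqrt h) t (pot b m h t) ((IZR m - b/2)^2) sigma kap h (wgt h t) (1 - kap - h*t/2) Hhe Hw1 eq_refl) as Hid.
  set (Y2 := (IZR m - b/2)^2) in *.
  assert (HY20 : 0 <= Y2) by apply pow2_ge_0.
  set (P := pot b m h t) in *. set (w := wgt h t) in *. set (e := sqrt h) in *. set (d := delta rho h) in *.
  clearbody Y2 P w e d.
  set (ed := e * d) in *.
  assert (Het : e * t <= ed) by (unfold ed; apply Rmult_le_compat_l; lra).
  assert (Het0 : 0 <= e * t) by (apply Rmult_le_pos; lra).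
  assert (H1 : w*P - h*Y2 <= h * (2 * (A + 2*b)^2 * ed)) by lra.
  assert (H2 : h*(Y2*e*t - w*sigma/2 - e*t^2 - w*h*t^2/4 + e*t/2) <= h * (ed * (Y2 + 1/2) - sigma/3)).
  { apply Rmult_le_compat_l; [lra|].
    assert (Y2 * (e*t) <= Y2 * ed) by (apply Rmult_le_compat_l; lra).
    assert (0 <= e*t^2) by (apply Rmult_le_pos; [lra|apply pow2_ge_0]).
    assert (0 <= w*h*t^2/4) by (assert (0 <= t^2) by apply pow2_ge_0; assert (0 <= w*h) by (apply Rmult_le_pos; lra);
       assert (0 <= w*h*t^2) by (apply Rmult_le_pos; lra); lra).
    assert (sigma/3 <= w*sigma/2) by (assert (2/3*sigma <= w*sigma) by (apply Rmult_le_compat_r; lra); lra).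
    replace (Y2*e*t) with (Y2*(e*t)) by ring. lra. }
  assert (H3 : e*kap <= kap) by (assert (e*kap <= 1*kap) by (apply Rmult_le_compat_r; lra); lra).
  assert (H4 : 2*w*kap*(1 - h*t/2) <= 2*kap).
  { assert (Hht : 0 <= h*t <= 1/3).
    { rewrite Hhe. replace (e*e*t) with (e*(e*t)) by ring. split. apply Rmult_le_pos; lra.
      assert (e*(e*t) <= 1*(e*t)) by (apply Rmult_le_compat_r; lra). lra. }
    assert (0 <= w * (1 - h*t/2)) by (apply Rmult_le_pos; lra).
    assert (w * (1 - h*t/2) <= 1 * 1) by (apply Rmult_le_compat; lra).
    replace (2*w*kap*(1 - h*t/2)) with (2*kap*(w*(1 - h*t/2))) by ring.
    assert (2*kap*(w*(1 - h*t/2)) <= 2*kap*1) by (apply Rmult_le_compat_l; lra). lra. }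
  assert (H5 : 0 <= w*kap^2) by (apply Rmult_le_pos; [lra|apply pow2_ge_0]).
  assert (Hfin : h * (2 * (A + 2*b)^2 * ed) + h * (ed * (Y2 + 1/2) - sigma/3) + 3 * kap <= 0).
  { assert (Hk3 : 3 * kap = h * (3 * kap / h)) by (field; lra).
    assert (ed * (2 * (A + 2*b)^2) + ed * (Y2 + 1/2) <= ed * (3 * (A + 2*b)^2 + 1)).
    { assert (0 <= ed) by (unfold ed; apply Rmult_le_pos; lra).
      assert ((A + b/2)^2 <= (A + 2*b)^2) by (apply pow_incr; lra). nra. }
    rewrite Hk3.
    assert (Hsum : 2 * (A + 2*b)^2 * ed + (ed * (Y2 + 1/2) - sigma/3) + 3*kap/h <= 0) by lra.
    replace (h * (2 * (A + 2*b)^2 * ed) + h * (ed * (Y2 + 1/2) - sigma/3) + h * (3 * kap / h))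
      with (h * (2 * (A + 2*b)^2 * ed + (ed * (Y2 + 1/2) - sigma/3) + 3*kap/h)) by ring.
    assert (h * (2 * (A + 2*b)^2 * ed + (ed * (Y2 + 1/2) - sigma/3) + 3*kap/h) <= h * 0)
      by (apply Rmult_le_compat_l; lra).
    lra. }
  lra.
Qed.

Lemma ineq_g A b rho m h sigma t : Hyp b rho h -> Rabs (IZR m) <= A -> 0 <= t <= delta rho h -> 0 < sigma ->
  ((A + b/2)^2 + sigma/2) * sqrt h <= 1 ->
  wgt h t - sqrt h <= wgt h t * (pot b m h t - (-1 - sqrt h + ((IZR m - b/2)^2 - 1/2 + sigma/2) * h)).
Proof.
  intros HH Hm Ht Hs Hsm.
  pose proof (w_int b rho h t HH Ht) as Hw.
  pose proof (pot_bound b rho m h t HH Ht) as [HP _].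
  pose proof HH as [Hh Hb Hd Hed].
  assert (He : 0 < sqrt h) by (apply sqrt_lt_R0; lra).
  assert (Hhe : h = sqrt h * sqrt h) by (symmetry; apply sqrt_sq; lra).
  assert (HY2 : (IZR m - b/2)^2 <= (A + b/2)^2).
  { rewrite <- pow2_abs. apply pow_incr. split; [apply Rabs_pos|apply absY; auto]. }
  set (Y2 := (IZR m - b/2)^2) in *. assert (0 <= Y2) by apply pow2_ge_0.
  set (P := pot b m h t) in *. set (w := wgt h t) in *. set (e := sqrt h) in *.
  clearbody Y2 P w e.
  assert (H1 : (Y2 + sigma/2) * h <= e).
  { rewrite Hhe. replace ((Y2 + sigma/2) * (e*e)) with (((Y2 + sigma/2) * e) * e) by ring.
    assert ((Y2 + sigma/2) * e <= 1).
    { assert ((Y2 + sigma/2) * e <= ((A + b/2)^2 + sigma/2) * e) by (apply Rmult_le_compat_r; lra). lra. }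
    assert (((Y2 + sigma/2) * e) * e <= 1 * e) by (apply Rmult_le_compat_r; lra). lra. }
  assert (H2 : w * ((Y2 + sigma/2) * h) <= (Y2 + sigma/2) * h).
  { assert (0 <= (Y2 + sigma/2) * h) by (apply Rmult_le_pos; lra).
    assert (w * ((Y2 + sigma/2) * h) <= 1 * ((Y2 + sigma/2) * h)) by (apply Rmult_le_compat_r; lra). lra. }
  assert (0 <= w * P) by (apply Rmult_le_pos; lra).
  assert (0 <= w * e) by (apply Rmult_le_pos; lra).
  assert (0 <= w * h) by (apply Rmult_le_pos; lra).
  replace (w * (P - (-1 - e + (Y2 - 1/2 + sigma/2) * h))) with (w*P + w + w*e - w * ((Y2 + sigma/2)*h) + w*h/2) by field.
  lra.
Qed.

Lemma isd_exp (g : R -> R) x a : is_derive g x a -> is_derive (fun y => exp (g y)) x (a * exp (g x)).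
Proof. intros H. apply (is_derive_comp exp g x (exp (g x)) a); auto. apply is_derive_Reals, derivable_pt_lim_exp. Qed.

Lemma isd_pe (p g : R -> R) x dp dg : is_derive p x dp -> is_derive g x dg ->
  is_derive (fun y => p y * exp (g y)) x (dp * exp (g x) + p x * (dg * exp (g x))).
Proof. intros Hp Hg. apply (isd_mult p (fun y => exp (g y))); auto. apply isd_exp; auto. Qed.

(* lower comparison function *)
Definition Sphi (h t : R) := - (t - h * t^2 / 4).
Definition phi (h t : R) := exp (Sphi h t).
Definition dphi (h t : R) := - (1 - h * t / 2) * phi h t.
Definition gphi (h t : R) := (sqrt h * (1 - h*t/2) + wgt h t * h/2 + wgt h t * (1 - h*t/2)^2) * phi h t.

Lemma Sphi_d h t : is_derive (Sphi h) t (- (1 - h * t / 2)).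
Proof. unfold Sphi. auto_derive; auto. field. Qed.

Lemma phi_deriv h t : is_derive (phi h) t (dphi h t).
Proof. unfold dphi, phi. replace (- (1 - h * t / 2) * exp (Sphi h t)) with ((- (1 - h * t / 2)) * exp (Sphi h t)) by ring.
  apply (isd_exp (Sphi h)). apply Sphi_d. Qed.

Lemma Pphi_deriv h t : is_derive (fun s => wgt h s * dphi h s) t (gphi h t).
Proof.
  unfold gphi, dphi, phi.
  refine (is_derive_ext (fun s => (wgt h s * - (1 - h * s / 2)) * exp (Sphi h s)) _ t _ _ _); [intros; simpl; ring|].
  replace ((sqrt h * (1 - h * t / 2) + wgt h t * h / 2 + wgt h t * (1 - h * t / 2) ^ 2) * exp (Sphi h t))
    with ((sqrt h * (1 - h * t / 2) + wgt h t * h / 2) * exp (Sphi h t) + (wgt h t * - (1 - h * t / 2)) * (- (1 - h * t / 2) * exp (Sphi h t))) by ring.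
  apply (isd_pe (fun s => wgt h s * - (1 - h * s / 2)) (Sphi h)); [|apply Sphi_d].
  unfold wgt. auto_derive; auto. field.
Qed.

(* upper comparison function *)
Definition S2 (h kap t : R) := - ((1 - kap) * t - h * t^2 / 4).
Definition fpsi (h kap t : R) := exp (S2 h kap t).
Definition qq (h kap d : R) := exp (S2 h kap d - d).
Definition psi (h kap d t : R) := fpsi h kap t - qq h kap d * exp t.
Definition dpsi (h kap d t : R) := - (1 - kap - h * t / 2) * fpsi h kap t - qq h kap d * exp t.
Definition gpsi (h kap d t : R) :=
  (sqrt h * (1 - kap - h*t/2) + wgt h t * h/2 + wgt h t * (1 - kap - h*t/2)^2) * fpsi h kap t
  - (wgt h t - sqrt h) * (qq h kap d * exp t).

Lemma S2_d h kap t : is_derive (S2 h kap) t (- (1 - kap - h * t / 2)).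
Proof. unfold S2. auto_derive; auto. field. Qed.

Lemma exp_d t : is_derive exp t (exp t).
Proof. apply is_derive_Reals, derivable_pt_lim_exp. Qed.

Lemma psi_deriv h kap d t : is_derive (psi h kap d) t (dpsi h kap d t).
Proof.
  unfold dpsi, psi, fpsi.
  apply (isd_minus (fun t => exp (S2 h kap t)) (fun t => qq h kap d * exp t)).
  - apply (isd_exp (S2 h kap)). apply S2_d.
  - replace (qq h kap d * exp t) with (0 * exp t + qq h kap d * exp t) by ring.
    apply (isd_mult (fun _ => qq h kap d) exp). apply isd_const. apply exp_d.
Qed.

Lemma Ppsi_deriv h kap d t : is_derive (fun s => wgt h s * dpsi h kap d s) t (gpsi h kap d t).
Proof.
  unfold gpsi, dpsi, fpsi.
  refine (is_derive_ext (fun s => (wgt h s * - (1 - kap - h * s / 2)) * exp (S2 h kap s) - (qq h kap d * wgt h s) * exp s) _ t _ _ _); [intros; simpl; ring|].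
  replace ((sqrt h * (1 - kap - h * t / 2) + wgt h t * h / 2 + wgt h t * (1 - kap - h * t / 2) ^ 2) *
    exp (S2 h kap t) - (wgt h t - sqrt h) * (qq h kap d * exp t))
    with (((sqrt h * (1 - kap - h * t / 2) + wgt h t * h / 2) * exp (S2 h kap t) + (wgt h t * - (1 - kap - h * t / 2)) * (- (1 - kap - h * t / 2) * exp (S2 h kap t)))
          - ((qq h kap d * (- sqrt h)) * exp t + (qq h kap d * wgt h t) * exp t)) by (unfold wgt; ring).
  apply (isd_minus (fun s => (wgt h s * - (1 - kap - h * s / 2)) * exp (S2 h kap s)) (fun s => (qq h kap d * wgt h s) * exp s)).
  - apply (isd_pe (fun s => wgt h s * - (1 - kap - h * s / 2)) (S2 h kap)); [|apply S2_d].
    unfold wgt. auto_derive; auto. field.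
  - apply (isd_mult (fun s => qq h kap d * wgt h s) exp); [|apply exp_d].
    unfold wgt. auto_derive; auto. ring.
Qed.

Lemma w0 h : wgt h 0 = 1.
Proof. unfold wgt. ring. Qed.

Lemma eq_to_g b m h mu (g u : R -> R) t : 0 < wgt h t ->
  - g t / wgt h t + pot b m h t * u t = mu * u t -> g t = wgt h t * (pot b m h t - mu) * u t.
Proof. intros Hw H. apply Rmult_eq_reg_r with (/ wgt h t). 2:{ apply Rinv_neq_0_compat; lra. }
  assert (g t * / wgt h t = pot b m h t * u t - mu * u t) by (unfold Rdiv in H; lra).
  rewrite H0. field. lra. Qed.

Lemma no_below A b rho m h beta sigma mu z0 (u du g : R -> R) : Hyp b rho h -> Rabs (IZR m) <= A ->
  0 <= beta <= (IZR m - b/2)^2 -> 0 < sigma ->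
  sqrt h * delta rho h ^ 2 + h * delta rho h ^ 2 / 4 + (2*A+b) * b * (sqrt h * delta rho h) <= 2/3 * sigma ->
  0 < z0 <= delta rho h ->
  (forall t, derivable_pt_lim u t (du t)) ->
  (forall t, derivable_pt_lim (fun s => wgt h s * du s) t (g t)) ->
  (forall t, 0 <= t <= z0 -> - g t / wgt h t + pot b m h t * u t = mu * u t) ->
  du 0 = - u 0 -> u z0 = 0 -> (exists t1, 0 <= t1 <= z0 /\ u t1 <> 0) ->
  mu < -1 - sqrt h + (beta - 1/2 - sigma) * h -> False.
Proof.
  intros HH Hm Hbeta Hs Hsmall Hz0 Hdu Hg Heq Hrob Hz Ht1 Hmu.
  pose proof HH as [Hh Hb Hd Hed].
  assert (Hw : forall t, 0 <= t <= z0 -> 0 < wgt h t).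
  { intros t Ht. pose proof (w_int b rho h t HH ltac:(lra)). lra. }
  apply (nodal (wgt h) (pot b m h) mu z0 u du g (phi h) (dphi h) (fun s => wgt h s * dphi h s) (gphi h)); auto.
  - apply w0.
  - intros t. apply is_derive_Reals. auto.
  - intros t. apply is_derive_Reals. auto.
  - intros t Ht. apply eq_to_g; auto.
  - apply phi_deriv.
  - apply Pphi_deriv.
  - intros t Ht. unfold phi. apply exp_pos.
  - unfold dphi. lra.
  - intros t Ht. unfold gphi.
    pose proof (ineq_low A b rho m h beta sigma t HH Hm Hbeta ltac:(lra) Hs Hsmall) as Hi.
    assert (0 < phi h t) by apply exp_pos.
    assert (0 < wgt h t) by (apply Hw; auto).
    assert (wgt h t * (pot b m h t - (-1 - sqrt h + (beta - 1 / 2 - sigma) * h)) < wgt h t * (pot b m h t - mu))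
      by (apply Rmult_lt_compat_l; lra).
    apply Rmult_lt_compat_r with (r := phi h t) in H1; auto.
    eapply Rle_lt_trans; [|exact H1]. apply Rmult_le_compat_r; lra.
Qed.

Lemma Pf_deriv b rho m h lam : Hyp b rho h -> forall t,
  is_derive (fun s => wgt h s * (aco rho h s * Pf b rho m h lam s)) t
    (dchi (delta rho h) t * Pf b rho m h lam t + chi (delta rho h) t * (cco b rho m h lam t * Vf b rho m h lam t)).
Proof.
  intros HH t. pose proof HH as [Hh Hb Hd Hed].
  destruct (VP_props b rho m h lam HH) as [HV [HP _]].
  refine (is_derive_ext (fun s => chi (delta rho h) s * Pf b rho m h lam s) _ t _ _ _).
  { intros s. symmetry. apply (wP_eq b); auto. }
  apply (isd_mult (chi (delta rho h)) (Pf b rho m h lam)); [apply chi_deriv; auto|apply HP].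
Qed.

Lemma upper_point A b rho m h sigma : Hyp b rho h -> Rabs (IZR m) <= A -> h <= 1 -> 0 < sigma ->
  let kap := 2 * exp (- delta rho h) in
  kap <= 1/2 ->
  sqrt h * delta rho h * (3 * (A + 2*b)^2 + 1) + 3 * kap / h <= sigma / 3 ->
  ((A + b/2)^2 + sigma/2) * sqrt h <= 1 ->
  exists t, 0 <= t <= delta rho h /\
    Vf b rho m h (-1 - sqrt h + ((IZR m - b/2)^2 - 1/2 + sigma) * h) t <= 0.
Proof.
  intros HH Hm Hh1 Hs kap Hk Hsm1 Hsm2.
  pose proof HH as [Hh Hb Hd Hed].
  set (d := delta rho h) in *.
  set (lu := -1 - sqrt h + ((IZR m - b/2)^2 - 1/2 + sigma) * h).
  set (mp := -1 - sqrt h + ((IZR m - b/2)^2 - 1/2 + sigma/2) * h).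
  destruct (classic (exists t, 0 <= t <= d /\ Vf b rho m h lu t <= 0)) as [|Hn]; auto.
  exfalso.
  assert (HVp : forall t, 0 <= t <= d -> 0 < Vf b rho m h lu t).
  { intros t Ht. destruct (Rlt_or_le 0 (Vf b rho m h lu t)); auto. exfalso. apply Hn. eauto. }
  destruct (VP_props b rho m h lu HH) as [HV [HP [HV0 HP0]]].
  assert (He : 0 < sqrt h) by (apply sqrt_lt_R0; lra).
  assert (He1 : sqrt h <= 1) by (rewrite <- sqrt_1; apply sqrt_le_1_alt; lra).
  assert (Hhe : h = sqrt h * sqrt h) by (symmetry; apply sqrt_sq; lra).
  assert (Hhd : h * d <= 1/3).
  { rewrite Hhe. replace (sqrt h * sqrt h * d) with (sqrt h * (sqrt h * d)) by ring.
    assert (sqrt h * (sqrt h * d) <= 1 * (sqrt h * d)) by (apply Rmult_le_compat_r; [apply Rmult_le_pos|]; lra). lra. }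
  assert (Hk0 : 0 < kap) by (unfold kap; assert (0 < exp (- d)) by apply exp_pos; lra).
  set (q := qq h kap d).
  assert (Hq : q <= kap / 2).
  { unfold q, qq, kap. replace (2 * exp (- d) / 2) with (exp (- d)) by field.
    destruct (Req_dec (S2 h (2 * exp (- d)) d - d) (- d)) as [->|Hne]; [lra|].
    left. apply exp_increasing. unfold S2.
    fold kap. assert (0 <= d * (1 - kap - h * d / 4)) by (apply Rmult_le_pos; lra).
    assert (- ((1 - kap) * d - h * d ^ 2 / 4) <= 0) by (simpl; lra).
    unfold S2 in Hne. fold kap in Hne. lra. }
  assert (Hq0 : 0 < q) by apply exp_pos.
  assert (Hpsid : psi h kap d d = 0).
  { unfold psi, fpsi, q, qq. rewrite <- exp_plus. replace (S2 h kap d - d + d) with (S2 h kap d) by ring. ring. }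
  assert (Hpsip : forall t, 0 <= t < d -> 0 < psi h kap d t).
  { intros t Ht. unfold psi, fpsi, qq. rewrite <- exp_plus.
    assert (S2 h kap d - d + t < S2 h kap t).
    { unfold S2.
      assert (Hfac : 0 < (d - t) * (2 - kap - h * (t + d) / 4)).
      { apply Rmult_lt_0_compat; [lra|].
        assert (h * t <= h * d) by (apply Rmult_le_compat_l; lra). lra. }
      replace (- ((1 - kap) * t - h * t ^ 2 / 4) - (- ((1 - kap) * d - h * d ^ 2 / 4) - d + t))
        with ((d - t) * (2 - kap - h * (t + d) / 4)) in Hfac |- * by field.
      simpl in *. lra. }
    apply exp_increasing in H. lra. }
  assert (Hfp : forall t, 0 < fpsi h kap t) by (intros; apply exp_pos).
  apply (wronsk (wgt h) (psi h kap d) (dpsi h kap d) (gpsi h kap d) (Vf b rho m h lu)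
     (fun t => aco rho h t * Pf b rho m h lu t) (fun t => wgt h t * (aco rho h t * Pf b rho m h lu t))
     (fun t => dchi d t * Pf b rho m h lu t + chi d t * (cco b rho m h lu t * Vf b rho m h lu t)) 0 d).
  - exact Hd.
  - apply psi_deriv.
  - apply Ppsi_deriv.
  - exact HV.
  - apply Pf_deriv; auto.
  - intros; reflexivity.
  - intros t Ht.
    assert (Ht' : 0 <= t <= d) by lra.
    rewrite dchi_low, chi_low by lra. rewrite cco_int by auto.
    pose proof (w_int b rho h t HH Ht') as Hw.
    pose proof (ineq_up A b rho m h sigma kap t HH Hm Hh1 Ht' Hs ltac:(lra) Hsm1) as Hu.
    pose proof (ineq_g A b rho m h sigma t HH Hm Ht' Hs Hsm2) as Hg.
    fold mp in Hu, Hg.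
    set (W := wgt h t * (pot b m h t - mp)) in *.
    assert (Hgp : W * psi h kap d t <= gpsi h kap d t).
    { unfold gpsi, psi. fold q.
      assert (0 < q * exp t) by (apply Rmult_lt_0_compat; [lra|apply exp_pos]).
      pose proof (Hfp t).
      assert (W * fpsi h kap t <= (sqrt h * (1 - kap - h * t / 2) + wgt h t * h / 2 + wgt h t * (1 - kap - h * t / 2) ^ 2) * fpsi h kap t)
        by (apply Rmult_le_compat_r; lra).
      assert ((wgt h t - sqrt h) * (q * exp t) <= W * (q * exp t)) by (apply Rmult_le_compat_r; lra).
      lra. }
    pose proof (HVp t Ht') as HVt. pose proof (Hpsip t ltac:(lra)) as Hpt.
    set (V := Vf b rho m h lu t) in *. set (ps := psi h kap d t) in *.
    assert (Hdiff : wgt h t * (pot b m h t - lu) = W - wgt h t * (sigma / 2 * h)).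
    { unfold W, mp, lu. field. }
    replace (V * gpsi h kap d t - ps * (0 * Pf b rho m h lu t + 1 * (wgt h t * (pot b m h t - lu) * V)))
      with (V * (gpsi h kap d t - W * ps) + V * ps * (wgt h t * (sigma / 2 * h))) by (rewrite Hdiff; ring).
    assert (0 <= V * (gpsi h kap d t - W * ps)) by (apply Rmult_le_pos; lra).
    assert (0 < V * ps * (wgt h t * (sigma / 2 * h))).
    { apply Rmult_lt_0_compat. apply Rmult_lt_0_compat; lra. apply Rmult_lt_0_compat; [lra|]. apply Rmult_lt_0_compat; lra. }
    lra.
  - assert (Hd0 : 0 <= 0 <= delta rho h) by (fold d; lra).
    rewrite HV0, w0, (aco_int b rho h 0 HH Hd0). rewrite w0, HP0.
    unfold dpsi, psi, fpsi. fold q. unfold S2.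
    replace (- ((1 - kap) * 0 - h * 0 ^ 2 / 4)) with 0 by (simpl; field). rewrite exp_0.
    lra.
  - rewrite Hpsid. rewrite Rmult_0_l, Rminus_0_r.
    pose proof (HVp d ltac:(lra)). pose proof (w_int b rho h d HH ltac:(split; [left; exact Hd|apply Rle_refl])).
    assert (dpsi h kap d d < 0).
    { unfold dpsi. pose proof (Hfp d). assert (0 < qq h kap d * exp d) by (apply Rmult_lt_0_compat; [apply exp_pos|apply exp_pos]).
      assert (0 < 1 - kap - h * d / 2) by lra.
      assert (0 < (1 - kap - h * d / 2) * fpsi h kap d) by (apply Rmult_lt_0_compat; lra). lra. }
    assert (0 < Vf b rho m h lu d * wgt h d) by (apply Rmult_lt_0_compat; lra).
    assert (Vf b rho m h lu d * (wgt h d * dpsi h kap d d) = (Vf b rho m h lu d * wgt h d) * dpsi h kap d d) by ring.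
    assert ((Vf b rho m h lu d * wgt h d) * dpsi h kap d d < 0).
    { assert (0 < (Vf b rho m h lu d * wgt h d) * (- dpsi h kap d d)) by (apply Rmult_lt_0_compat; lra). lra. }
    lra.
Qed.

Lemma cand_facts b rho m h lam : Hyp b rho h ->
  (forall t, derivable_pt_lim (Vf b rho m h lam) t (aco rho h t * Pf b rho m h lam t)) /\
  (forall t, derivable_pt_lim (fun s => wgt h s * (aco rho h s * Pf b rho m h lam s)) t
     (dchi (delta rho h) t * Pf b rho m h lam t + chi (delta rho h) t * (cco b rho m h lam t * Vf b rho m h lam t))) /\
  (forall t, 0 <= t <= delta rho h ->
     - (dchi (delta rho h) t * Pf b rho m h lam t + chi (delta rho h) t * (cco b rho m h lam t * Vf b rho m h lam t)) / wgt h t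
     + pot b m h t * Vf b rho m h lam t = lam * Vf b rho m h lam t) /\
  (forall t, 0 <= t <= delta rho h ->
     dchi (delta rho h) t * Pf b rho m h lam t + chi (delta rho h) t * (cco b rho m h lam t * Vf b rho m h lam t)
     = wgt h t * (pot b m h t - lam) * Vf b rho m h lam t) /\
  aco rho h 0 * Pf b rho m h lam 0 = - Vf b rho m h lam 0 /\
  Vf b rho m h lam 0 = 1 /\
  (forall t, 0 <= t <= delta rho h -> aco rho h t * Pf b rho m h lam t = Pf b rho m h lam t / wgt h t).
Proof.
  intros HH. pose proof HH as [Hh Hb Hd Hed].
  destruct (VP_props b rho m h lam HH) as [HV [HP [HV0 HP0]]].
  split; [|split; [|split; [|split; [|split; [|split]]]]].
  - intros t. apply is_derive_Reals. apply HV.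
  - intros t. apply is_derive_Reals. apply Pf_deriv; auto.
  - intros t Ht. rewrite dchi_low, chi_low by lra. rewrite cco_int by auto.
    assert (2/3 <= wgt h t) by (apply (w_int b rho); auto). field. lra.
  - intros t Ht. rewrite dchi_low, chi_low by lra. rewrite cco_int by auto. ring.
  - rewrite (aco_int b rho h 0 HH) by lra. rewrite HV0, HP0. rewrite w0. field.
  - exact HV0.
  - intros t Ht. rewrite (aco_int b rho h t HH Ht). unfold Rdiv. ring.
Qed.

Definition Zs (b rho : R) (m : Z) (h lam : R) := exists t, 0 <= t <= delta rho h /\ Vf b rho m h lam t <= 0.

Lemma V_cont b rho m h lam : Hyp b rho h -> forall t, continuity_pt (Vf b rho m h lam) t.
Proof. intros HH t. destruct (VP_props b rho m h lam HH) as [HV _].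
  apply (cont_of_deriv _ _ HV). Qed.

Lemma below_notZ A b rho m h beta sigma lam : Hyp b rho h -> Rabs (IZR m) <= A ->
  0 <= beta <= (IZR m - b/2)^2 -> 0 < sigma ->
  sqrt h * delta rho h ^ 2 + h * delta rho h ^ 2 / 4 + (2*A+b) * b * (sqrt h * delta rho h) <= 2/3 * sigma ->
  lam < -1 - sqrt h + (beta - 1/2 - sigma) * h -> ~ Zs b rho m h lam.
Proof.
  intros HH Hm Hbeta Hs Hsm Hlam [t1 [Ht1 HVt1]].
  pose proof HH as [Hh Hb Hd Hed].
  destruct (cand_facts b rho m h lam HH) as [H1 [H2 [H3 [H4 [H5 [H6 H7]]]]]].
  destruct (first_zero (Vf b rho m h lam) 0 t1) as [z [Hz1 [Hz2 Hz3]]]; [lra|intros; apply V_cont; auto|lra|auto|].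
  apply (no_below A b rho m h beta sigma lam z (Vf b rho m h lam) (fun t => aco rho h t * Pf b rho m h lam t)
    (fun t => dchi (delta rho h) t * Pf b rho m h lam t + chi (delta rho h) t * (cco b rho m h lam t * Vf b rho m h lam t)));
    auto.
  - lra.
  - intros t Ht. apply H3. lra.
  - exists 0. split; [lra|]. rewrite H6. lra.
Qed.

Lemma lowest_exists A b rho m h beta sigma : Hyp b rho h -> Rabs (IZR m) <= A -> h <= 1 ->
  0 <= beta <= (IZR m - b/2)^2 -> 0 < sigma ->
  sqrt h * delta rho h ^ 2 + h * delta rho h ^ 2 / 4 + (2*A+b) * b * (sqrt h * delta rho h) <= 2/3 * sigma ->
  2 * exp (- delta rho h) <= 1/2 ->
  sqrt h * delta rho h * (3 * (A + 2*b)^2 + 1) + 3 * (2 * exp (- delta rho h)) / h <= sigma / 3 ->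
  ((A + b/2)^2 + sigma/2) * sqrt h <= 1 ->
  exists lam, is_lowest_eigenvalue b rho m h lam /\
    lam <= -1 - sqrt h + ((IZR m - b/2)^2 - 1/2 + sigma) * h.
Proof.
  intros HH Hm Hh1 Hbeta Hs Hsl Hk Hsu Hsg.
  pose proof HH as [Hh Hb Hd Hed].
  set (lu := -1 - sqrt h + ((IZR m - b/2)^2 - 1/2 + sigma) * h).
  set (mu0 := -1 - sqrt h + (beta - 1/2 - sigma) * h).
  assert (Hlu : Zs b rho m h lu) by (apply (upper_point A b rho m h sigma); auto).
  assert (Hlow : forall lam, Zs b rho m h lam -> mu0 <= lam).
  { intros lam Hz. destruct (Rlt_or_le lam mu0); auto. exfalso.
    apply (below_notZ A b rho m h beta sigma lam); auto. }
  set (E := fun x => Zs b rho m h (- x)).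
  assert (HEb : bound E).
  { exists (- mu0). intros x Hx. specialize (Hlow (- x) Hx). lra. }
  assert (HEn : exists x, E x) by (exists (- lu); unfold E; rewrite Ropp_involutive; auto).
  destruct (completeness E HEb HEn) as [l [Hub Hlub]].
  set (ls := - l).
  assert (Hi : forall lam, Zs b rho m h lam -> ls <= lam).
  { intros lam Hz. assert (E (- lam)) by (unfold E; rewrite Ropp_involutive; auto).
    specialize (Hub _ H). unfold ls. lra. }
  assert (Hii : forall eps, 0 < eps -> exists lam, Zs b rho m h lam /\ lam < ls + eps).
  { intros eps He. apply NNPP. intros Hn.
    assert (l <= l - eps); [|lra].
    apply Hlub. intros x Hx. destruct (Rle_or_lt x (l - eps)); auto. exfalso.
    apply Hn. exists (- x). split; auto. unfold ls. lra. }
  assert (Hls_lu : ls <= lu) by (apply Hi; auto).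
  destruct (cand_facts b rho m h ls HH) as [C1 [C2 [C3 [C4 [C5 [C6 C7]]]]]].
  set (Vs := Vf b rho m h ls) in *.
  assert (HZs : Zs b rho m h ls).
  { apply NNPP. intros Hn.
    assert (Hpos : forall t, 0 <= t <= delta rho h -> 0 < Vs t).
    { intros t Ht. destruct (Rlt_or_le 0 (Vs t)); auto. exfalso. apply Hn. exists t. auto. }
    destruct (continuity_ab_min Vs 0 (delta rho h)) as [tm [Htm Htm']]; [lra|intros; apply V_cont; auto|].
    assert (Hm0 : 0 < Vs tm) by (apply Hpos; auto).
    destruct (cont_lam b rho m h ls HH (Vs tm) Hm0) as [r [Hr Hcont]].
    destruct (Hii r Hr) as [lam [[t [Ht HVt]] Hlam]].
    specialize (Hi lam (ex_intro _ t (conj Ht HVt))).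
    assert (Rabs (lam - ls) < r) by (rewrite Rabs_right; lra).
    specialize (Hcont lam H t Ht). apply Rabs_lt_between in Hcont.
    specialize (Htm t Ht). fold Vs in Hcont. lra. }
  assert (HVd : Vs (delta rho h) = 0).
  { destruct HZs as [t1 [Ht1 HVt1]].
    destruct (first_zero Vs 0 t1) as [z [Hz1 [Hz2 Hz3]]]; [lra|intros; apply V_cont; auto|rewrite C6; lra|auto|].
    destruct (Req_dec z (delta rho h)) as [<-|Hzd]; auto.
    exfalso.
    assert (Hzd' : z < delta rho h) by lra.
    set (Ps := Pf b rho m h ls) in *.
    assert (HPz : Ps z <> 0) by (intros HP0; apply (uniq0 b rho m h ls z HH); auto; lra).
    assert (Hdz : aco rho h z * Ps z <= 0).
    { apply (deriv_nonpos_left Vs z _ z); auto; [apply is_derive_Reals; apply C1|lra|].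
      intros s Hs'. apply Hz3. lra. }
    rewrite C7 in Hdz by lra.
    pose proof (w_int b rho h z HH ltac:(lra)) as Hw.
    assert (Hneg : aco rho h z * Ps z < 0).
    { rewrite C7 by lra. assert (Ps z < 0).
      { destruct (Rtotal_order (Ps z) 0) as [|[|]]; auto; [contradiction|].
        assert (0 < Ps z / wgt h z) by (apply Rdiv_lt_0_compat; lra). lra. }
      assert (0 < (- Ps z) / wgt h z) by (apply Rdiv_lt_0_compat; lra). unfold Rdiv in *. lra. }
    destruct (deriv_neg_point Vs z (aco rho h z * Ps z) (delta rho h - z)) as [t' [Ht' HVt']];
      [apply is_derive_Reals; apply C1|auto|auto|lra|].
    destruct (cont_lam b rho m h ls HH (- Vs t') ltac:(lra)) as [r0 [Hr0 Hc]].
    assert (HZ' : Zs b rho m h (ls - r0/2)).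
    { exists t'. split; [lra|].
      assert (Rabs (ls - r0/2 - ls) < r0) by (rewrite Rabs_left; lra).
      specialize (Hc (ls - r0/2) H t' ltac:(lra)). apply Rabs_lt_between in Hc. fold Vs in Hc. lra. }
    specialize (Hi _ HZ'). lra. }
  exists ls. split; [split|exact Hls_lu].
  - apply cand_eigen; auto.
  - intros mu [u [du [g [Hdu [Hg [Heq [Hrob [Hud Ht1]]]]]]]].
    destruct (Rle_or_lt ls mu) as [|Hmu]; auto. exfalso.
    set (lp := (mu + ls) / 2).
    assert (HnZ : ~ Zs b rho m h lp) by (intros HZ; specialize (Hi _ HZ); unfold lp in HZ; unfold lp in *; lra).
    destruct (cand_facts b rho m h lp HH) as [D1 [D2 [D3 [D4 [D5 [D6 D7]]]]]].
    assert (Hpos : forall t, 0 <= t <= delta rho h -> 0 < Vf b rho m h lp t).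
    { intros t Ht. destruct (Rlt_or_le 0 (Vf b rho m h lp t)); auto. exfalso. apply HnZ. exists t. auto. }
    assert (Hw : forall t, 0 <= t <= delta rho h -> 0 < wgt h t).
    { intros t Ht. pose proof (w_int b rho h t HH Ht). lra. }
    apply (nodal (wgt h) (pot b m h) mu (delta rho h) u du g (Vf b rho m h lp)
      (fun t => aco rho h t * Pf b rho m h lp t) (fun t => wgt h t * (aco rho h t * Pf b rho m h lp t))
      (fun t => dchi (delta rho h) t * Pf b rho m h lp t + chi (delta rho h) t * (cco b rho m h lp t * Vf b rho m h lp t)));
      auto.
    + apply w0.
    + intros t. apply is_derive_Reals. auto.
    + intros t. apply is_derive_Reals. auto.
    + intros t Ht. apply eq_to_g; auto.
    + intros t. apply is_derive_Reals. auto.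
    + intros t. apply is_derive_Reals. auto.
    + lra.
    + intros t Ht. rewrite D4 by auto.
      assert (0 < wgt h t * Vf b rho m h lp t) by (apply Rmult_lt_0_compat; auto).
      assert (mu < lp) by (unfold lp; lra).
      replace (wgt h t * (pot b m h t - lp) * Vf b rho m h lp t) with
        (wgt h t * (pot b m h t - mu) * Vf b rho m h lp t - (wgt h t * Vf b rho m h lp t) * (lp - mu)) by ring.
      assert (0 < (wgt h t * Vf b rho m h lp t) * (lp - mu)) by (apply Rmult_lt_0_compat; lra).
      lra.
Qed.

Lemma exp_le' x y : x <= y -> exp x <= exp y.
Proof. intros H. destruct (Req_dec x y) as [->|]; [lra|]. left. apply exp_increasing. lra. Qed.

Lemma exp_sq_bound y : 0 <= y -> y^2/4 <= exp y.
Proof.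
  intros Hy. replace y with (y/2 + y/2) at 2 by field. rewrite exp_plus.
  pose proof (exp_ineq1_le (y/2)). assert (0 <= y/2) by lra.
  assert ((y/2) * (y/2) <= exp (y/2) * exp (y/2)) by (apply Rmult_le_compat; lra).
  replace (y^2/4) with ((y/2)*(y/2)) by field. lra.
Qed.

Lemma small_of_L nu eta L : 0 < nu -> 0 < eta -> Rabs (ln eta) / nu <= L -> exp (- nu * L) <= eta.
Proof.
  intros Hn He HL. rewrite <- (exp_ln eta) by auto. apply exp_le'.
  assert (Rabs (ln eta) <= nu * L).
  { apply Rmult_le_reg_r with (/ nu). apply Rinv_0_lt_compat; auto.
    replace (nu * L * / nu) with L by (field; lra). exact HL. }
  pose proof (Rle_abs (- ln eta)). rewrite Rabs_Ropp in H0. lra.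
Qed.

Lemma eig_lower A b rho m h beta sigma mu : Hyp b rho h -> Rabs (IZR m) <= A ->
  0 <= beta <= (IZR m - b/2)^2 -> 0 < sigma ->
  sqrt h * delta rho h ^ 2 + h * delta rho h ^ 2 / 4 + (2*A+b) * b * (sqrt h * delta rho h) <= 2/3 * sigma ->
  is_eigenvalue b rho m h mu -> -1 - sqrt h + (beta - 1/2 - sigma) * h <= mu.
Proof.
  intros HH Hm Hbeta Hs Hsm [u [du [g [Hdu [Hg [Heq [Hrob [Hud Ht1]]]]]]]].
  pose proof HH as [Hh Hb Hd Hed].
  destruct (Rle_or_lt (-1 - sqrt h + (beta - 1/2 - sigma) * h) mu); auto. exfalso.
  apply (no_below A b rho m h beta sigma mu (delta rho h) u du g); auto. lra.
Qed.

Theorem proposition2p7 (A b rho beta : R) :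
  0 < A -> 0 < b -> 1/4 < rho < 1/2 -> is_beta_hat b A beta ->
  forall eps : R, 0 < eps ->
  exists h0 : R, 0 < h0 /\
  forall h : R, 0 < h < h0 -> Rpower h (1/2 - rho) < 1/3 ->
    let target := -1 - sqrt h + (beta - 1/2) * h in
    (forall m : Z, Rabs (IZR m) <= A ->
       exists lam, is_lowest_eigenvalue b rho m h lam) /\
    (forall (m : Z) (lam : R), Rabs (IZR m) <= A ->
       is_lowest_eigenvalue b rho m h lam -> target - eps * h <= lam) /\
    (exists (m : Z) (lam : R), Rabs (IZR m) <= A /\
       is_lowest_eigenvalue b rho m h lam /\ lam <= target + eps * h).
Proof.
  intros HA Hb Hrho [[m0 [Hm0 Hbeta0]] Hbeta] sigma Hs.
  assert (Hb0 : 0 <= beta) by (rewrite Hbeta0; apply pow2_ge_0).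
  set (ga := 1/2 - rho). set (nu := 2 * rho - 1/2).
  assert (Hga : 0 < ga) by (unfold ga; lra). assert (Hnu : 0 < nu) by (unfold nu; lra).
  set (Cup := 3 * (A + 2*b)^2 + 1).
  assert (HCup : 0 < Cup) by (unfold Cup; pose proof (pow2_ge_0 (A + 2*b)); lra).
  set (Cl := 5/4 + (2*A+b)*b).
  assert (HCl : 0 < Cl) by (unfold Cl; assert (0 < (2*A+b)*b) by (apply Rmult_lt_0_compat; lra); lra).
  set (eta1 := 2/3 * sigma / Cl). set (eta2 := sigma / (6 * Cup)).
  assert (He1 : 0 < eta1) by (unfold eta1; apply Rdiv_lt_0_compat; lra).
  assert (He2 : 0 < eta2) by (unfold eta2; apply Rdiv_lt_0_compat; lra).
  set (K3 := (A + b/2)^2 + sigma/2 + 1).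
  assert (HK3 : 1 <= K3) by (unfold K3; pose proof (pow2_ge_0 (A + b/2)); lra).
  set (C := Rabs (ln (36 / sigma)) + 2).
  set (L0 := 1 + 8 / ga^2 + C + Rabs (ln (1/3)) / nu + Rabs (ln eta1) / nu + Rabs (ln eta2) / nu + 2 * Rabs (ln K3)).
  assert (HL0s : 1 <= 1 /\ 0 <= 8 / ga^2 /\ 2 <= C /\ 0 <= Rabs (ln (1/3)) / nu /\ 0 <= Rabs (ln eta1) / nu
                 /\ 0 <= Rabs (ln eta2) / nu /\ 0 <= 2 * Rabs (ln K3)).
  { repeat split; try lra.
    - apply Rdiv_le_0_compat; [lra|]. apply pow_lt; lra.
    - unfold C. pose proof (Rabs_pos (ln (36/sigma))). lra.
    - apply Rdiv_le_0_compat; [apply Rabs_pos|lra].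
    - apply Rdiv_le_0_compat; [apply Rabs_pos|lra].
    - apply Rdiv_le_0_compat; [apply Rabs_pos|lra].
    - pose proof (Rabs_pos (ln K3)). lra. }
  exists (exp (- L0)). split; [apply exp_pos|].
  intros h [Hh Hhh] _ target.
  set (L := - ln h).
  assert (HL : L0 < L).
  { assert (Hl : ln h < ln (exp (- L0))) by (apply ln_increasing; auto).
    rewrite ln_exp in Hl. unfold L. lra. }
  unfold L0 in HL.
  assert (Hhe : h = exp (- L)) by (unfold L; rewrite Ropp_involutive, exp_ln; auto).
  assert (Hse : sqrt h = exp (- L / 2)).
  { rewrite <- Rpower_sqrt by auto. unfold Rpower. f_equal. unfold L. field. }
  assert (Hde : delta rho h = exp (ga * L)).
  { unfold delta, Rpower. f_equal. unfold L, ga. ring. }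
  assert (Hed : sqrt h * delta rho h = exp (- rho * L)).
  { rewrite Hse, Hde, <- exp_plus. f_equal. unfold ga. field. }
  assert (Hed2 : sqrt h * delta rho h ^ 2 = exp (- nu * L)).
  { rewrite Hse, Hde. simpl. rewrite Rmult_1_r, <- !exp_plus. f_equal. unfold ga, nu. field. }
  assert (Hhd2 : h * delta rho h ^ 2 = exp (- (2 * rho) * L)).
  { rewrite Hhe at 1. rewrite Hde. simpl. rewrite Rmult_1_r, <- !exp_plus. f_equal. unfold ga. field. }
  set (X := exp (- nu * L)).
  assert (HL1 : 1 <= L) by lra.
  assert (HX1 : exp (- rho * L) <= X) by (apply exp_le'; apply Rmult_le_compat_r; unfold nu; lra).
  assert (HX2 : exp (- (2*rho) * L) <= X) by (apply exp_le'; apply Rmult_le_compat_r; unfold nu; lra).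
  assert (HX3 : X <= 1/3) by (apply small_of_L; [lra|lra|]; lra).
  assert (HX4 : X <= eta1) by (apply small_of_L; [lra|lra|]; lra).
  assert (HX5 : X <= eta2) by (apply small_of_L; [lra|lra|]; lra).
  assert (Hd0 : 0 < delta rho h) by (rewrite Hde; apply exp_pos).
  assert (HH : Hyp b rho h).
  { constructor; auto. rewrite Hed. lra. }
  assert (Hh1 : h <= 1) by (rewrite Hhe; rewrite <- exp_0; apply exp_le'; lra).
  assert (Hsl : sqrt h * delta rho h ^ 2 + h * delta rho h ^ 2 / 4 + (2*A+b) * b * (sqrt h * delta rho h) <= 2/3 * sigma).
  { rewrite Hed2, Hhd2, Hed. fold X.
    assert (0 < (2*A+b)*b) by (apply Rmult_lt_0_compat; lra).
    assert ((2*A+b)*b * exp (- rho * L) <= (2*A+b)*b * X) by (apply Rmult_le_compat_l; lra).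
    assert (X * Cl <= eta1 * Cl) by (apply Rmult_le_compat_r; lra).
    unfold eta1 in H1. replace (2 / 3 * sigma / Cl * Cl) with (2/3*sigma) in H1 by (field; lra).
    unfold Cl in H1. lra. }
  assert (Hdl : L + C <= delta rho h).
  { rewrite Hde. eapply Rle_trans; [|apply exp_sq_bound; nra].
    assert (HLg : 8 / ga^2 <= L) by lra.
    assert (8 <= ga^2 * L).
    { apply Rmult_le_reg_r with (/ ga^2). apply Rinv_0_lt_compat, pow_lt; lra.
      replace (ga^2 * L * / ga^2) with L by (field; lra). exact HLg. }
    assert (C <= L) by lra.
    replace ((ga * L)^2/4) with ((ga^2 * L) * L / 4) by (simpl; field).
    assert (8 * L <= (ga^2 * L) * L) by (apply Rmult_le_compat_r; lra). lra. }
  assert (Hk : 2 * exp (- delta rho h) <= 1/2).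
  { assert (exp (- delta rho h) <= exp (-2)) by (apply exp_le'; unfold C in Hdl; pose proof (Rabs_pos (ln (36/sigma))); lra).
    assert (exp (-2) <= 1/4).
    { replace (-2) with (- (1 + 1)) by ring. rewrite exp_Ropp, exp_plus.
      pose proof (exp_ineq1_le 1). 
      apply Rmult_le_reg_r with (exp 1 * exp 1). apply Rmult_lt_0_compat; apply exp_pos.
      rewrite Rinv_l by (apply Rgt_not_eq, Rmult_lt_0_compat; apply exp_pos).
      assert (2 * 2 <= exp 1 * exp 1) by (apply Rmult_le_compat; lra). lra. }
    lra. }
  assert (Hsu : sqrt h * delta rho h * Cup + 3 * (2 * exp (- delta rho h)) / h <= sigma / 3).
  { rewrite Hed.
    assert (exp (- rho * L) * Cup <= eta2 * Cup) by (apply Rmult_le_compat_r; lra).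
    unfold eta2 in H. replace (sigma / (6 * Cup) * Cup) with (sigma/6) in H by (field; lra).
    assert (3 * (2 * exp (- delta rho h)) / h <= sigma / 6).
    { rewrite Hhe at 2. replace (3 * (2 * exp (- delta rho h)) / exp (- L)) with (6 * exp (L - delta rho h)).
      2:{ unfold Rminus. rewrite exp_plus. rewrite !exp_Ropp.
          assert (exp L <> 0) by (apply Rgt_not_eq, exp_pos). assert (exp (delta rho h) <> 0) by (apply Rgt_not_eq, exp_pos).
          field. auto. }
      assert (exp (L - delta rho h) <= exp (- ln (36 / sigma))).
      { apply exp_le'. pose proof (Rle_abs (ln (36/sigma))) as Hab. unfold C in Hdl. lra. }
      rewrite exp_Ropp, exp_ln in H0 by (apply Rdiv_lt_0_compat; lra).
      replace (/ (36 / sigma)) with (sigma / 36) in H0 by (field; lra). lra. }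
    lra. }
  assert (Hsg : ((A + b/2)^2 + sigma/2) * sqrt h <= 1).
  { rewrite Hse. assert (exp (- L / 2) <= / K3).
    { rewrite <- exp_ln with (x := / K3) by (apply Rinv_0_lt_compat; lra). apply exp_le'.
      rewrite ln_Rinv by lra. pose proof (Rle_abs (ln K3)). lra. }
    assert (((A + b/2)^2 + sigma/2) * exp (- L / 2) <= K3 * / K3).
    { apply Rmult_le_compat; [pose proof (pow2_ge_0 (A + b/2)); lra|left; apply exp_pos| |auto]. unfold K3; lra. }
    rewrite Rinv_r in H0 by lra. lra. }
  split; [|split].
  - intros m Hm. destruct (lowest_exists A b rho m h beta sigma HH Hm Hh1) as [lam [Hl _]]; eauto.
  - intros m lam Hm [Hl _]. unfold target.
    pose proof (eig_lower A b rho m h beta sigma lam HH Hm ltac:(split; auto) Hs Hsl Hl). lra.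
  - destruct (lowest_exists A b rho m0 h beta sigma HH Hm0 Hh1) as [lam [Hl Hlu]]; auto.
    exists m0, lam. split; auto. split; auto. unfold target. rewrite <- Hbeta0 in Hlu. lra.
Qed.
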